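(* Let $0<q<1$, $0<a<q^{-1}$, $b<q^{-1}$, $c\in\mathbb{C}\setminus\{0\}$ with $\alpha acq^{m}\ne1$, $\alpha bq^m/c\neq1$ for $m\ge1$, and let $\alpha$ satisfy $\sqrt{aq}<\alpha<1/\sqrt{aq}$. For $n\in\mathbb{N}$ and $x=\cos\theta$, $\theta\in[0,\pi]$, \[ \sum_{k=0}^\infty\alpha^k p_n(q^k;a,b;q)\,\frac{(\sqrt{aq})^k}{(q;q)_k}\,Q_k\bigl(x;c\sqrt{aq},\tfrac{b}{c}\sqrt{q/a}\,\big|\,q\bigr) =\frac{\alpha^n(aq)^{n/2}\,(\alpha acq^{n+1},\alpha bq^{n+1}/c;q)_\infty}{(aq;q)_n\,(\alpha\sqrt{aq}\,e^{i\theta},\alpha\sqrt{aq}\,e^{-i\theta};q)_\infty}\;p_n\bigl(x;\alpha\sqrt{aq},c\sqrt{aq},\tfrac{b}{c}\sqrt{q/a},\sqrt{aq}/\alpha\,\big|\,q\bigr). \] In particular, for $\alpha=1$ the right-hand side is $\frac{(aq)^{n/2}(acq^{n+1},bq^{n+1}/c;q)_\infty}{(aq;q)_n(\sqrt{aq}e^{i\theta},\sqrt{aq}e^{-i\theta};q)_\infty}\,p_n(x;\sqrt{aq},c\sqrt{aq},\tfrac bc\sqrt{q/a},\sqrt{aq}|q)$.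
   Context: $(x;q)_k=\prod_{j=0}^{k-1}(1-xq^j)$, $(x;q)_\infty=\prod_{j\ge0}(1-xq^j)$, $(x_1,\dots,x_r;q)_k=\prod_i(x_i;q)_k$. ${}_{r}\phi_{s}\!\left(\begin{smallmatrix}a_1,\dots,a_r\\ b_1,\dots,b_s\end{smallmatrix};q,z\right)=\sum_{j\ge0}\frac{(a_1,\dots,a_r;q)_j}{(q,b_1,\dots,b_s;q)_j}\bigl((-1)^jq^{j(j-1)/2}\bigr)^{1+s-r}z^j$. Little $q$-Jacobi: $p_n(x;a,b;q)={}_2\phi_1\!\left(\begin{smallmatrix}q^{-n},abq^{n+1}\\ aq\end{smallmatrix};q,qx\right)$. Al-Salam–Chihara: $Q_n(x;c_1,c_2|q)=\frac{(c_1c_2;q)_n}{c_1^n}\,{}_3\phi_2\!\left(\begin{smallmatrix}q^{-n},c_1e^{i\theta},c_1e^{-i\theta}\\ c_1c_2,\,0\end{smallmatrix};q,q\right)$. Askey–Wilson: $p_n(x;a_1,a_2,a_3,a_4|q)=a_1^{-n}(a_1a_2,a_1a_3,a_1a_4;q)_n\,{}_4\phi_3\!\left(\begin{smallmatrix}q^{-n},a_1a_2a_3a_4q^{n-1},a_1e^{i\theta},a_1e^{-i\theta}\\ a_1a_2,\,a_1a_3,\,a_1a_4\end{smallmatrix};q,q\right)$, all with $x=\cos\theta$. *)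

(* Defs.v *)
From Stdlib Require Import Reals Lra List ZArith.
From Stdlib Require Import ClassicalEpsilon.
Open Scope R_scope.

Definition Cplx : Type := (R * R)%type.
Definition RtoC (x : R) : Cplx := (x, 0).
Definition Czero : Cplx := (0, 0).
Definition Cone : Cplx := (1, 0).
Definition Cadd (z w : Cplx) : Cplx := (fst z + fst w, snd z + snd w).
Definition Copp (z : Cplx) : Cplx := (- fst z, - snd z).
Definition Csub (z w : Cplx) : Cplx := Cadd z (Copp w).
Definition Cmul (z w : Cplx) : Cplx :=
  (fst z * fst w - snd z * snd w, fst z * snd w + snd z * fst w).
Definition Cinv (z : Cplx) : Cplx :=
  let d := fst z * fst z + snd z * snd z in (fst z / d, - snd z / d).
Definition Cdiv (z w : Cplx) : Cplx := Cmul z (Cinv w).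
Fixpoint Cpow (z : Cplx) (n : nat) : Cplx :=
  match n with O => Cone | S m => Cmul z (Cpow z m) end.
Definition Cexpi (t : R) : Cplx := (cos t, sin t).

Fixpoint Csum (f : nat -> Cplx) (N : nat) : Cplx :=
  match N with O => Czero | S m => Cadd (Csum f m) (f m) end.
Fixpoint Cprod (f : nat -> Cplx) (N : nat) : Cplx :=
  match N with O => Cone | S m => Cmul (Cprod f m) (f m) end.

(** convergence of a complex sequence (componentwise = in modulus) *)
Definition Cconv (u : nat -> Cplx) (l : Cplx) : Prop :=
  Un_cv (fun k => fst (u k)) (fst l) /\ Un_cv (fun k => snd (u k)) (snd l).

(** the limit of a sequence (its value is meaningful when the sequence
    converges; chosen by classical description) *)
Definition Clim (u : nat -> Cplx) : Cplx :=
  epsilon (inhabits Czero) (fun l => Cconv u l).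

Definition Cseries_conv (f : nat -> Cplx) (l : Cplx) : Prop :=
  Cconv (fun N => Csum f N) l.

Definition qpoch (x : Cplx) (q : R) (k : nat) : Cplx :=
  Cprod (fun j => Csub Cone (Cmul x (RtoC (q ^ j)))) k.
Definition qpoch_inf (x : Cplx) (q : R) : Cplx := Clim (fun k => qpoch x q k).
Definition qpochs (xs : list Cplx) (q : R) (k : nat) : Cplx :=
  fold_right (fun x acc => Cmul (qpoch x q k) acc) Cone xs.

(** All series below contain q^{-n} as a
    numerator parameter and therefore terminate at j = n; they are summed
    over j = 0..n. *)
Definition phi_term (as_ bs : list Cplx) (q : R) (z : Cplx) (j : nat) : Cplx :=
  let r := Z.of_nat (length as_) in
  let s := Z.of_nat (length bs) in
  Cmul (Cdiv (qpochs as_ q j) (qpochs (RtoC q :: bs) q j))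
       (Cmul (RtoC (powerRZ ((-1) ^ j * q ^ (j * (j - 1) / 2)) (1 + s - r)))
             (Cpow z j)).
Definition phi_trunc (as_ bs : list Cplx) (q : R) (z : Cplx) (N : nat) : Cplx :=
  Csum (phi_term as_ bs q z) (S N).

Definition little_qJacobi (n : nat) (x a b q : R) : Cplx :=
  phi_trunc (RtoC (/ q ^ n) :: RtoC (a * b * q ^ (S n)) :: nil)
            (RtoC (a * q) :: nil) q (RtoC (q * x)) n.

Definition al_salam_chihara (n : nat) (theta : R) (c1 c2 : Cplx) (q : R) : Cplx :=
  Cmul (Cdiv (qpoch (Cmul c1 c2) q n) (Cpow c1 n))
       (phi_trunc (RtoC (/ q ^ n) :: Cmul c1 (Cexpi theta)
                     :: Cmul c1 (Cexpi (- theta)) :: nil)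
                  (Cmul c1 c2 :: Czero :: nil) q (RtoC q) n).

Definition askey_wilson (n : nat) (theta : R) (a1 a2 a3 a4 : Cplx) (q : R) : Cplx :=
  Cmul (Cdiv (qpochs (Cmul a1 a2 :: Cmul a1 a3 :: Cmul a1 a4 :: nil) q n)
             (Cpow a1 n))
       (phi_trunc (RtoC (/ q ^ n)
                     :: Cmul (Cmul (Cmul (Cmul a1 a2) a3) a4)
                             (RtoC (powerRZ q (Z.of_nat n - 1)))
                     :: Cmul a1 (Cexpi theta)
                     :: Cmul a1 (Cexpi (- theta)) :: nil)
                  (Cmul a1 a2 :: Cmul a1 a3 :: Cmul a1 a4 :: nil)
                  q (RtoC q) n).

(* Main.v *)
From Coquelicot Require Import Coquelicot.
Require Import Defs.
From Stdlib Require Import Reals List Lra Lia ClassicalEpsilon.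
Open Scope R_scope.

Open Scope R_scope.

Lemma Cinv_eqC z : Defs.Cinv z = Complex.Cinv z.
Proof. unfold Defs.Cinv, Complex.Cinv. simpl. f_equal; f_equal; ring. Qed.
Lemma Cdiv_eqC z w : Defs.Cdiv z w = Complex.Cdiv z w.
Proof. unfold Defs.Cdiv, Complex.Cdiv. rewrite Cinv_eqC. reflexivity. Qed.

Ltac toC := repeat rewrite ?Cdiv_eqC, ?Cinv_eqC in *;
  try change Defs.Cmul with Cmult in *; try change Defs.Cadd with Cplus in *;
  try change Defs.Csub with Cminus in *; try change Defs.Copp with Complex.Copp in *;
  try change Defs.RtoC with Complex.RtoC in *; try change Defs.Cpow with Complex.Cpow in *;
  try change Czero with (Complex.RtoC 0) in *; try change Cone with (Complex.RtoC 1) in *.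

Open Scope C_scope.
Notation RC := Complex.RtoC.
Definition Cplx_field_th : @Field_theory.field_theory Cplx (RC 0) (RC 1) Cplus Cmult Cminus Complex.Copp Complex.Cdiv Complex.Cinv eq := C_field_theory.
Add Field Cplx_field : Cplx_field_th.
Ltac tC := toC; match goal with |- @eq _ ?a ?b => let T := type of a in change (@eq T a b) end.
Ltac cring := (tC || idtac); ring.
Ltac cfield := (tC || idtac); field.

Lemma Csum_S f n : Csum f (S n) = Csum f n + f n.
Proof. reflexivity. Qed.
Lemma Csum_O f : Csum f 0 = RC 0.
Proof. reflexivity. Qed.
Lemma Csum_ext f g N : (forall k, (k < N)%nat -> f k = g k) -> Csum f N = Csum g N.
Proof. induction N; intros H; [reflexivity|]. rewrite !Csum_S, IHN, H; auto. Qed.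
Lemma Csum_plus f g N : Csum (fun k => f k + g k) N = Csum f N + Csum g N.
Proof. induction N; [simpl; cring|].
 rewrite !Csum_S, IHN. cring. Qed.
Lemma Csum_scal c f N : Csum (fun k => c * f k) N = c * Csum f N.
Proof. induction N; [simpl; cring|].
 rewrite !Csum_S, IHN. cring. Qed.
Lemma Csum_opp f N : Csum (fun k => - f k) N = - Csum f N.
Proof. induction N; [simpl; cring|].
 rewrite !Csum_S, IHN. cring. Qed.
Lemma Csum_zero f N : (forall k, (k < N)%nat -> f k = RC 0) -> Csum f N = RC 0.
Proof. induction N; intros H; [reflexivity|]. rewrite Csum_S, IHN, H; auto. cring. Qed.
Lemma Csum_first f N : Csum f (S N) = f O + Csum (fun k => f (S k)) N.
Proof. induction N; [rewrite Csum_S, !Csum_O; cring|].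
 rewrite Csum_S, IHN, (Csum_S (fun k => f (S k))). cring. Qed.
Lemma Csum_split f N M : Csum f (N + M)%nat = Csum f N + Csum (fun k => f (N + k)%nat) M.
Proof. induction M; [rewrite Nat.add_0_r, Csum_O; cring|].
 rewrite Nat.add_succ_r, !Csum_S, IHM. cring. Qed.
Lemma Csum_extend f n N : (n <= N)%nat -> (forall k, (n <= k)%nat -> (k < N)%nat -> f k = RC 0) ->
  Csum f N = Csum f n.
Proof. intros Hn H. replace N with (n + (N - n))%nat by lia. rewrite Csum_split.
 rewrite (Csum_zero (fun k => f (n+k)%nat)). cring. intros k Hk. apply H; lia. Qed.

Lemma qpoch_O x q : qpoch x q 0 = RC 1.
Proof. reflexivity. Qed.
Lemma qpoch_S x q k : qpoch x q (S k) = qpoch x q k * (1 - x * RC (q ^ k)).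
Proof. reflexivity. Qed.
Lemma qpoch_add x q j m : qpoch x q (j + m) = qpoch x q j * qpoch (x * RC (q ^ j)) q m.
Proof. induction m.
 - rewrite Nat.add_0_r, qpoch_O. cring.
 - rewrite Nat.add_succ_r, !qpoch_S, IHm, pow_add, RtoC_mult. cring. Qed.

Open Scope R_scope.
Open Scope R_scope.

Lemma Un_cv_ext (u v : nat -> R) l : (forall n, u n = v n) -> Un_cv u l -> Un_cv v l.
Proof. intros H Hu e He. destruct (Hu e He) as [N HN]. exists N. intros n Hn. rewrite <- H. auto. Qed.

Lemma Un_cv_S (u : nat -> R) l : Un_cv (fun n => u (S n)) l -> Un_cv u l.
Proof. intros H e He. destruct (H e He) as [N HN]. exists (S N). intros n Hn.
 destruct n; [lia|]. apply HN. lia. Qed.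
Lemma Un_cv_S' (u : nat -> R) l : Un_cv u l -> Un_cv (fun n => u (S n)) l.
Proof. intros H e He. destruct (H e He) as [N HN]. exists N. intros n Hn. apply HN. lia. Qed.
Lemma Un_cv_shift (u : nat -> R) l k : Un_cv (fun n => u (n + k)%nat) l -> Un_cv u l.
Proof. intros H e He. destruct (H e He) as [N HN]. exists (N + k)%nat. intros n Hn.
 replace n with ((n - k) + k)%nat by lia. apply HN. lia. Qed.
Lemma Un_cv_const c : Un_cv (fun _ => c) c.
Proof. intros e He. exists O. intros. unfold Rdist. rewrite Rminus_diag, Rabs_R0. lra. Qed.

Lemma Cconv_unique u l1 l2 : Cconv u l1 -> Cconv u l2 -> l1 = l2.
Proof. intros [a b] [c d]. apply injective_projections; eapply UL_sequence; eauto. Qed.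

Lemma Clim_eq u l : Cconv u l -> Clim u = l.
Proof. intros H. unfold Clim. apply Cconv_unique with u; [|exact H].
 apply (epsilon_spec (inhabits Czero) (fun l => Cconv u l)). eauto. Qed.

Lemma Cconv_ext u v l : (forall n, u n = v n) -> Cconv u l -> Cconv v l.
Proof. intros H [a b]. split; eapply Un_cv_ext; eauto; intros n; simpl; rewrite H; auto. Qed.
Lemma Cconv_S u l : Cconv (fun n => u (S n)) l -> Cconv u l.
Proof. intros [a b]; split; apply Un_cv_S; auto. Qed.
Lemma Cconv_S' u l : Cconv u l -> Cconv (fun n => u (S n)) l.
Proof. intros [a b]; split; apply (Un_cv_S' (fun n => _ (u n))); auto. Qed.
Lemma Cconv_shift u l k : Cconv (fun n => u (n + k)%nat) l -> Cconv u l.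
Proof. intros [a b]; split; eapply Un_cv_shift; eauto. Qed.
Lemma Cconv_const c : Cconv (fun _ => c) c.
Proof. split; apply Un_cv_const. Qed.

Open Scope C_scope.
Lemma Cconv_plus u v l m : Cconv u l -> Cconv v m -> Cconv (fun n => u n + v n) (l + m).
Proof. intros [a b] [c d]. split; simpl.
 - apply (CV_plus (fun n => fst (u n)) (fun n => fst (v n))); auto.
 - apply (CV_plus (fun n => snd (u n)) (fun n => snd (v n))); auto. Qed.
Lemma Cconv_mult u v l m : Cconv u l -> Cconv v m -> Cconv (fun n => u n * v n) (l * m).
Proof. intros [a b] [c d]. split; simpl.
 - apply (CV_minus (fun n => fst (u n) * fst (v n)) (fun n => snd (u n) * snd (v n)))%R;
   apply CV_mult; auto.
 - apply (CV_plus (fun n => fst (u n) * snd (v n)) (fun n => snd (u n) * fst (v n)))%R;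
   apply CV_mult; auto. Qed.
Lemma Cconv_scal c u l : Cconv u l -> Cconv (fun n => c * u n) (c * l).
Proof. intros H. apply Cconv_mult; auto. apply Cconv_const. Qed.
Lemma Cconv_opp u l : Cconv u l -> Cconv (fun n => - u n) (- l).
Proof. intros [a b]. split; simpl.
 - apply (Un_cv_ext (opp_seq (fun n => fst (u n)))); [reflexivity|]. apply CV_opp; auto.
 - apply (Un_cv_ext (opp_seq (fun n => snd (u n)))); [reflexivity|]. apply CV_opp; auto. Qed.
Lemma Cconv_minus u v l m : Cconv u l -> Cconv v m -> Cconv (fun n => u n - v n) (l - m).
Proof. intros. apply Cconv_plus; auto. apply Cconv_opp; auto. Qed.

Lemma fst_le_Cmod z : Rabs (fst z) <= Cmod z.
Proof. pose proof (Rmax_Cmod z). pose proof (Rmax_l (Rabs (fst z)) (Rabs (snd z))). lra. Qed.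
Lemma snd_le_Cmod z : Rabs (snd z) <= Cmod z.
Proof. pose proof (Rmax_Cmod z). pose proof (Rmax_r (Rabs (fst z)) (Rabs (snd z))). lra. Qed.

Lemma Cconv_mod0 u (e : nat -> R) : (forall n, Cmod (u n) <= e n) -> Un_cv e 0 -> Cconv u (RC 0).
Proof. intros H He. split; intros eps Heps; destruct (He eps Heps) as [N HN]; exists N;
 intros n Hn; specialize (HN n Hn); specialize (H n); unfold Rdist in *; simpl;
 rewrite Rminus_0_r in *.
 - pose proof (fst_le_Cmod (u n)). pose proof (Rle_abs (e n)). lra.
 - pose proof (snd_le_Cmod (u n)). pose proof (Rle_abs (e n)). lra. Qed.

Lemma Un_cv_abs_bound (x : nat -> R) l c B : Un_cv x l -> (forall n, Rabs (x n - c) <= B) -> Rabs (l - c) <= B.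
Proof. intros Hx H.
 assert (A1 : (c - B <= l)%R).
 { apply Rle_cv_lim with (Un := fun _ => (c - B)%R) (Vn := x); auto. intros n; specialize (H n); apply Rabs_le_between' in H. lra. apply Un_cv_const. }
 assert (A2 : (l <= c + B)%R).
 { apply Rle_cv_lim with (Un := x) (Vn := fun _ => (c + B)%R); auto. intros n; specialize (H n); apply Rabs_le_between' in H. lra. apply Un_cv_const. }
 apply Rabs_le. lra. Qed.

Lemma Cconv_mod_bound u l c B : Cconv u l -> (forall n, Cmod (u n - c) <= B) -> Cmod (l - c) <= sqrt 2 * B.
Proof. intros [a b] H.
 assert (H1 : Rabs (fst l - fst c) <= B).
 { apply (Un_cv_abs_bound (fun n => fst (u n))); auto. intros n.
   replace (fst (u n) - fst c)%R with (fst (u n - c)) by (simpl; ring). eapply Rle_trans; [apply fst_le_Cmod|apply H]. }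
 assert (H2 : Rabs (snd l - snd c) <= B).
 { apply (Un_cv_abs_bound (fun n => snd (u n))); auto. intros n.
   replace (snd (u n) - snd c)%R with (snd (u n - c)) by (simpl; ring). eapply Rle_trans; [apply snd_le_Cmod|apply H]. }
 eapply Rle_trans; [apply Cmod_2Rmax|]. apply Rmult_le_compat_l. apply sqrt_pos.
 apply Rmax_lub; [replace (fst (l - c)) with (fst l - fst c)%R by (simpl; ring) | replace (snd (l - c)) with (snd l - snd c)%R by (simpl; ring)]; lra. Qed.

Lemma sqrt2_lt_2 : sqrt 2 < 2.
Proof. rewrite <- (sqrt_Rsqr 2) at 2 by lra. apply sqrt_lt_1_alt. unfold Rsqr. lra. Qed.

Lemma Cconv_nonzero u l L : Cconv u l -> (0 < L)%R -> (forall n, L <= Cmod (u n)) -> l <> RC 0.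
Proof. intros [a b] HL H Hl. subst l. simpl in a, b.
 destruct (a (L/2)%R) as [N1 H1]; [lra|]. destruct (b (L/2)%R) as [N2 H2]; [lra|].
 specialize (H1 (N1 + N2)%nat ltac:(lia)). specialize (H2 (N1 + N2)%nat ltac:(lia)).
 unfold Rdist in *. rewrite Rminus_0_r in *. specialize (H (N1+N2)%nat).
 pose proof (Cmod_2Rmax (u (N1+N2)%nat)). pose proof sqrt2_lt_2. pose proof (sqrt_pos 2).
 assert (Rmax (Rabs (fst (u (N1 + N2)%nat))) (Rabs (snd (u (N1 + N2)%nat))) < L/2)%R
   by (apply Rmax_lub_lt; lra).
 assert (sqrt 2 * Rmax (Rabs (fst (u (N1 + N2)%nat))) (Rabs (snd (u (N1 + N2)%nat))) < L)%R.
 { pose proof (Rmax_Cmod (u (N1+N2)%nat)). pose proof (Cmod_ge_0 (u (N1+N2)%nat)). nra. }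
 lra. Qed.

Lemma Csum_fst f N : fst (Csum f (S N)) = sum_f_R0 (fun k => fst (f k)) N.
Proof. induction N; simpl; [ring|]. simpl in IHN. rewrite IHN. reflexivity. Qed.
Lemma Csum_snd f N : snd (Csum f (S N)) = sum_f_R0 (fun k => snd (f k)) N.
Proof. induction N; simpl; [ring|]. simpl in IHN. rewrite IHN. reflexivity. Qed.

Lemma Cconv_Csum_of f la lb : infinite_sum (fun k => fst (f k)) la -> infinite_sum (fun k => snd (f k)) lb ->
  Cconv (Csum f) (la, lb).
Proof. intros Ha Hb. split; apply Un_cv_S.
 - eapply Un_cv_ext; [|exact Ha]. intros n. cbv beta. rewrite Csum_fst. reflexivity.
 - eapply Un_cv_ext; [|exact Hb]. intros n. cbv beta. rewrite Csum_snd. reflexivity. Qed.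
Lemma Cconv_Csum_to f l : Cconv (Csum f) l ->
  infinite_sum (fun k => fst (f k)) (fst l) /\ infinite_sum (fun k => snd (f k)) (snd l).
Proof. intros [a b]. split.
 - eapply Un_cv_ext; [|apply (Un_cv_S' (fun n => fst (Csum f n))); exact a]. intros n. cbv beta. rewrite Csum_fst. reflexivity.
 - eapply Un_cv_ext; [|apply (Un_cv_S' (fun n => snd (Csum f n))); exact b]. intros n. cbv beta. rewrite Csum_snd. reflexivity. Qed.

Lemma ex_series_dom (a : nat -> R) K r : (0 <= r < 1)%R -> (forall k, Rabs (a k) <= K * r ^ k)%R -> ex_series a.
Proof. intros Hr H. apply (ex_series_le a (fun k => K * r ^ k)%R).
 - intros n. apply H.
 - apply (ex_series_scal_l K (fun k => r ^ k)%R). apply ex_series_geom. rewrite Rabs_pos_eq; lra. Qed.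

Lemma geom_conv f K r : (0 <= r < 1)%R -> (forall k, Cmod (f k) <= K * r ^ k)%R -> exists l, Cconv (Csum f) l.
Proof. intros Hr H.
 destruct (ex_series_dom (fun k => fst (f k)) K r Hr) as [la Ha].
 { intros k. eapply Rle_trans; [apply fst_le_Cmod|apply H]. }
 destruct (ex_series_dom (fun k => snd (f k)) K r Hr) as [lb Hb].
 { intros k. eapply Rle_trans; [apply snd_le_Cmod|apply H]. }
 exists (la, lb). apply Cconv_Csum_of; apply is_series_Reals; auto. Qed.

Lemma Csum_mod_le f (g : nat -> R) N : (forall k, Cmod (f k) <= g k)%R ->
  (Cmod (Csum f N) <= fst (Csum (fun k => RC (g k)) N))%R.
Proof. intros H. induction N.
 - simpl. change (Cmod (RC 0) <= 0)%R. rewrite Cmod_0. lra.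
 - rewrite !Csum_S. eapply Rle_trans; [apply Cmod_triangle|]. simpl. specialize (H N). lra. Qed.

Lemma Csum_geom_fst K r N : (0 <= r < 1)%R -> (0 <= K)%R -> (fst (Csum (fun k => RC (K * r ^ k)) N) <= K / (1 - r))%R.
Proof. intros Hr HK. assert (E : forall N, (fst (Csum (fun k => RC (K * r ^ k)) N) = K * (1 - r ^ N) / (1 - r))%R).
 { induction N0; simpl; [field; lra|]. simpl in IHN0. rewrite IHN0. field. lra. }
 rewrite E. unfold Rdiv. rewrite Rmult_assoc. apply Rmult_le_compat_l; auto.
 pose proof (pow_le r N (proj1 Hr)). rewrite <- (Rmult_1_l (/ (1 - r))) at 2. apply Rmult_le_compat_r. left; apply Rinv_0_lt_compat; lra. lra. Qed.
Lemma Cconv_lim_eq u l l' : l = l' -> Cconv u l -> Cconv u l'.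
Proof. intros ->; auto. Qed.

Open Scope R_scope.
Open Scope R_scope.

Lemma exp_le x y : x <= y -> exp x <= exp y.
Proof. intros [H|H]; [left; apply exp_increasing; auto|subst; lra]. Qed.

Lemma Un_cv_geom r : 0 <= r < 1 -> Un_cv (fun n => r ^ n) 0.
Proof. intros Hr. apply is_lim_seq_Reals. apply is_lim_seq_geom. rewrite Rabs_pos_eq; lra. Qed.

Lemma pow_le1 q k : 0 <= q <= 1 -> q ^ k <= 1.
Proof. intros H. induction k; simpl; [lra|]. pose proof (pow_le q k (proj1 H)). nra. Qed.

Lemma Cmod_RC x : Cmod (RC x) = Rabs x.
Proof. apply Cmod_R. Qed.

Lemma Cmod_1_minus_le w : Cmod (RC 1 - w)%C <= 1 + Cmod w.
Proof. eapply Rle_trans; [apply Cmod_triangle|]. rewrite Cmod_opp, Cmod_RC, Rabs_R1. lra. Qed.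
Lemma Cmod_1_minus_ge w : 1 - Cmod w <= Cmod (RC 1 - w)%C.
Proof. pose proof (Cmod_triangle (RC 1 - w)%C w).
 replace (RC 1 - w + w)%C with (RC 1) in H by cring. rewrite Cmod_RC, Rabs_R1 in H. lra. Qed.

Lemma Cmod_xq x q j : 0 < q -> Cmod (x * RC (q ^ j))%C = Cmod x * q ^ j.
Proof. intros Hq. rewrite Cmod_mult, Cmod_RC, Rabs_pos_eq; auto. apply pow_le; lra. Qed.

Lemma qpoch_upper x q k : 0 < q < 1 -> Cmod (qpoch x q k) <= exp (Cmod x / (1 - q)).
Proof. intros Hq.
 assert (H : Cmod (qpoch x q k) <= exp (Cmod x * ((1 - q ^ k) / (1 - q)))).
 { induction k.
   - simpl. change (Cmod (RC 1) <= exp (Cmod x * ((1 - 1) / (1 - q)))).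
     rewrite Cmod_RC, Rabs_R1. replace (Cmod x * ((1 - 1) / (1 - q))) with 0 by (field; lra).
     rewrite exp_0. lra.
   - rewrite qpoch_S, Cmod_mult.
     replace (Cmod x * ((1 - q ^ S k) / (1 - q))) with (Cmod x * ((1 - q ^ k) / (1 - q)) + Cmod x * q ^ k)
       by (simpl; field; lra).
     rewrite exp_plus. apply Rmult_le_compat; try apply Cmod_ge_0; auto.
     eapply Rle_trans; [apply Cmod_1_minus_le|]. rewrite Cmod_xq by lra.
     apply exp_ineq1_le. }
 eapply Rle_trans; [exact H|]. apply exp_le.
 assert (0 < / (1 - q)) by (apply Rinv_0_lt_compat; lra).
 assert (0 <= Cmod x * q ^ k * / (1 - q)).
 { apply Rmult_le_pos; [apply Rmult_le_pos; [apply Cmod_ge_0|apply pow_le; lra]|lra]. }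
 unfold Rdiv. lra. Qed.

Lemma one_minus_ge_exp y m : 0 <= y <= m -> m < 1 -> exp (- (y / (1 - m))) <= 1 - y.
Proof. intros Hy Hm.
 assert (A : exp (y / (1 - y)) * (1 - y) >= 1).
 { pose proof (exp_ineq1_le (y / (1 - y))). 
   assert ((1 + y / (1 - y)) * (1 - y) = 1) by (field; lra).
   assert (0 < 1 - y) by lra. nra. }
 assert (B : exp (- (y / (1 - m))) <= exp (- (y / (1 - y)))).
 { apply exp_le. apply Ropp_le_contravar. unfold Rdiv. apply Rmult_le_compat_l; [lra|].
   apply Rinv_le_contravar; lra. }

 assert (0 < exp (y / (1 - y))) by apply exp_pos.
 eapply Rle_trans; [exact B|].
 apply (Rmult_le_reg_l (exp (y / (1 - y)))); auto. rewrite <- exp_plus, Rplus_opp_r, exp_0. lra. Qed.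

Lemma qpoch_lower x q k : 0 < q < 1 -> Cmod x < 1 ->
  exp (- (Cmod x / ((1 - q) * (1 - Cmod x)))) <= Cmod (qpoch x q k).
Proof. intros Hq Hx. pose proof (Cmod_ge_0 x).
 assert (HH : exp (- (Cmod x * ((1 - q ^ k) / (1 - q)) / (1 - Cmod x))) <= Cmod (qpoch x q k)).
 { induction k.
   - simpl. change (exp (- (Cmod x * ((1 - 1) / (1 - q)) / (1 - Cmod x))) <= Cmod (RC 1)).
     rewrite Cmod_RC, Rabs_R1. replace (- (Cmod x * ((1 - 1) / (1 - q)) / (1 - Cmod x))) with 0 by (field; lra).
     rewrite exp_0. lra.
   - rewrite qpoch_S, Cmod_mult.
     replace (- (Cmod x * ((1 - q ^ S k) / (1 - q)) / (1 - Cmod x))) with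
       (- (Cmod x * ((1 - q ^ k) / (1 - q)) / (1 - Cmod x)) + - (Cmod x * q ^ k / (1 - Cmod x)))
       by (simpl; field; lra).
     rewrite exp_plus. apply Rmult_le_compat; try (left; apply exp_pos); auto.
     eapply Rle_trans; [|apply Cmod_1_minus_ge]. rewrite Cmod_xq by lra.
     apply one_minus_ge_exp; auto. pose proof (pow_le q k). split. apply Rmult_le_pos; lra.
     assert (q ^ k <= 1) by (apply pow_le1; lra). nra. }
 eapply Rle_trans; [|exact HH]. apply exp_le. apply Ropp_le_contravar.
 assert (0 < / (1 - q)) by (apply Rinv_0_lt_compat; lra).
 assert (0 < / (1 - Cmod x)) by (apply Rinv_0_lt_compat; lra).
 assert (0 <= Cmod x * q ^ k * / (1 - q) * / (1 - Cmod x)).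
 { repeat apply Rmult_le_pos; try lra. apply pow_le; lra. }
 unfold Rdiv. rewrite Rinv_mult. lra. Qed.

Lemma qpoch_as_sum x q k : qpoch x q k = (RC 1 + Csum (fun j => - (qpoch x q j * (x * RC (q ^ j)))) k)%C.
Proof. induction k.
 - simpl. apply injective_projections; simpl; ring.
 - rewrite qpoch_S, Csum_S, IHk. cring. Qed.

Lemma qpoch_conv x q : 0 < q < 1 -> Cconv (fun k => qpoch x q k) (qpoch_inf x q).
Proof. intros Hq.
 destruct (geom_conv (fun j => - (qpoch x q j * (x * RC (q ^ j))))%C (exp (Cmod x / (1 - q)) * Cmod x) q)
   as [l Hl]; [lra| |].
 - intros k. rewrite Cmod_opp, Cmod_mult, Cmod_xq by lra. rewrite <- Rmult_assoc.
   apply Rmult_le_compat_r; [apply pow_le; lra|]. apply Rmult_le_compat_r; [apply Cmod_ge_0|].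
   apply qpoch_upper; auto.
 - assert (H : Cconv (fun k => qpoch x q k) (RC 1 + l)%C).
   { eapply Cconv_ext; [|apply Cconv_plus; [apply Cconv_const|exact Hl]].
     intros n. simpl. rewrite (qpoch_as_sum x q n). reflexivity. }
   unfold qpoch_inf. rewrite (Clim_eq _ _ H). exact H. Qed.

Lemma qpoch_inf_split x q j : 0 < q < 1 -> qpoch_inf x q = (qpoch x q j * qpoch_inf (x * RC (q ^ j)) q)%C.
Proof. intros Hq. apply (Cconv_unique (fun k => qpoch x q k)); [apply qpoch_conv; auto|].
 apply Cconv_shift with (k := j).
 eapply Cconv_ext; [|apply Cconv_scal; apply qpoch_conv; auto].
 intros m. simpl. rewrite Nat.add_comm, qpoch_add. reflexivity. Qed.

Lemma qpoch_inf_nz x q : 0 < q < 1 -> Cmod x < 1 -> qpoch_inf x q <> RC 0.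
Proof. intros Hq Hx. eapply Cconv_nonzero; [apply qpoch_conv; auto|apply exp_pos|].
 intros n. apply qpoch_lower; auto. Qed.

Lemma qpoch_nz x q k : (forall j, (j < k)%nat -> (RC 1 - x * RC (q ^ j))%C <> RC 0) -> qpoch x q k <> RC 0.
Proof. induction k; intros H.
 - simpl. intros E. injection E. lra.
 - rewrite qpoch_S. apply Cmult_neq_0; auto. Qed.

Open Scope R_scope.
Open Scope R_scope.

Lemma Cpow_mult_l (a b : Complex.C) k : ((a * b) ^ k = a ^ k * b ^ k)%C.
Proof. induction k; simpl; [cring|]. rewrite IHk. cring. Qed.
Lemma RC_pow x k : RC (x ^ k) = (RC x ^ k)%C.
Proof. apply RtoC_pow. Qed.
Lemma RC_mult x y : RC (x * y) = (RC x * RC y)%C.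
Proof. apply RtoC_mult. Qed.
Lemma RC_minus x y : RC (x - y) = (RC x - RC y)%C.
Proof. apply RtoC_minus. Qed.
Lemma RC_neq x y : x <> y -> RC x <> RC y.
Proof. intros H E. injection E. auto. Qed.

Lemma qq_factor_nz q j : 0 < q < 1 -> (RC 1 - RC q * RC (q ^ j))%C <> RC 0.
Proof. intros Hq. rewrite <- RC_mult, <- RC_minus. apply RC_neq.
 pose proof (pow_le1 q j). pose proof (pow_le q j). nra. Qed.
Lemma qq_nz q k : 0 < q < 1 -> qpoch (RC q) q k <> RC 0.
Proof. intros Hq. apply qpoch_nz. intros j _. apply qq_factor_nz; auto. Qed.

Section QBin.
Variables (q : R) (A : Complex.C).
Hypothesis Hq : 0 < q < 1.

Definition cc k := (qpoch A q k / qpoch (RC q) q k)%C.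
Definition Mb := exp (Cmod A / (1 - q)) / exp (- (q / ((1 - q) * (1 - q)))).

Lemma cc_bound k : Cmod (cc k) <= Mb.
Proof. unfold cc, Mb. rewrite Cmod_div by (apply qq_nz; auto).
 pose proof (qpoch_upper A q k Hq).
 assert (L : exp (- (q / ((1 - q) * (1 - q)))) <= Cmod (qpoch (RC q) q k)).
 { pose proof (qpoch_lower (RC q) q k Hq). rewrite Cmod_RC, Rabs_pos_eq in H0 by lra. apply H0. 
   lra. }
 pose proof (exp_pos (- (q / ((1 - q) * (1 - q))))).
 unfold Rdiv. apply Rmult_le_compat; auto. apply Cmod_ge_0. left; apply Rinv_0_lt_compat.
 lra. apply Rinv_le_contravar; auto. Qed.

Lemma Mb_pos : 0 < Mb.
Proof. unfold Mb. unfold Rdiv. apply Rmult_lt_0_compat; [apply exp_pos|apply Rinv_0_lt_compat, exp_pos]. Qed.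

Lemma cc_rec k : (cc (S k) * (RC 1 - RC (q ^ S k)) = cc k * (RC 1 - A * RC (q ^ k)))%C.
Proof. unfold cc. rewrite !qpoch_S. 
 assert (H1 := qq_nz q k Hq). assert (H2 := qq_factor_nz q k Hq).
 replace (RC (q ^ S k)) with (RC q * RC (q ^ k))%C by (simpl; rewrite RC_mult; reflexivity).
 cfield. split; auto. Qed.

Definition sN (w : Complex.C) N := Csum (fun k => cc k * w ^ k)%C N.

Lemma sN_diff z N : ((RC 1 - z) * sN z N - (RC 1 - A * z) * sN (RC q * z) N
   = - (cc N * (RC 1 - RC (q ^ N)) * z ^ N))%C.
Proof. induction N.
 - unfold sN. simpl. unfold cc. simpl. apply injective_projections; simpl; field.
 - unfold sN in *. rewrite !Csum_S.
   replace ((RC 1 - z) * (Csum (fun k => cc k * z ^ k) N + cc N * z ^ N) -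
     (RC 1 - A * z) * (Csum (fun k => cc k * (RC q * z) ^ k) N + cc N * (RC q * z) ^ N))%C
   with (((RC 1 - z) * Csum (fun k => cc k * z ^ k) N -
     (RC 1 - A * z) * Csum (fun k => cc k * (RC q * z) ^ k) N) + ((RC 1 - z) * cc N * z ^ N -
     (RC 1 - A * z) * cc N * (RC q * z) ^ N))%C by cring.
   rewrite IHN. rewrite Cpow_mult_l, <- RC_pow.
   replace (- (cc (S N) * (RC 1 - RC (q ^ S N)) * z ^ S N))%C
     with (- ((cc (S N) * (RC 1 - RC (q ^ S N))) * z ^ S N))%C by cring.
   rewrite cc_rec. simpl. cring. Qed.
End QBin.

Section QBin2.
Variables (q : R) (A : Complex.C).
Hypothesis Hq : 0 < q < 1.

Lemma sN_conv w : Cmod w < 1 -> exists l, Cconv (sN q A w) l.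
Proof. intros Hw. apply (geom_conv _ (Mb q A) (Cmod w)). split; [apply Cmod_ge_0|auto].
 intros k. rewrite Cmod_mult, Cmod_pow. apply Rmult_le_compat_r. apply pow_le, Cmod_ge_0.
 apply cc_bound; auto. Qed.

Definition Sf w := Clim (sN q A w).
Lemma Sf_conv w : Cmod w < 1 -> Cconv (sN q A w) (Sf w).
Proof. intros Hw. destruct (sN_conv w Hw) as [l Hl]. unfold Sf. rewrite (Clim_eq _ _ Hl). auto. Qed.

Lemma Cmod_qz z : Cmod (RC q * z)%C = q * Cmod z.
Proof. rewrite Cmod_mult, Cmod_RC, Rabs_pos_eq; lra. Qed.

Lemma Sf_diff z : Cmod z < 1 -> ((RC 1 - z) * Sf z = (RC 1 - A * z) * Sf (RC q * z))%C.
Proof. intros Hz.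
 assert (Hqz : Cmod (RC q * z)%C < 1) by (rewrite Cmod_qz; pose proof (Cmod_ge_0 z); nra).
 assert (H1 : Cconv (fun N => (RC 1 - z) * sN q A z N - (RC 1 - A * z) * sN q A (RC q * z) N)%C
     ((RC 1 - z) * Sf z - (RC 1 - A * z) * Sf (RC q * z))%C).
 { apply Cconv_minus; apply Cconv_scal; apply Sf_conv; auto. }
 assert (H2 : Cconv (fun N => (RC 1 - z) * sN q A z N - (RC 1 - A * z) * sN q A (RC q * z) N)%C (RC 0)).
 { eapply Cconv_ext. intros N. symmetry. apply sN_diff; auto.
   apply Cconv_mod0 with (e := fun N => Mb q A * Cmod z ^ N).
   - intros N. rewrite Cmod_opp, !Cmod_mult, Cmod_pow, <- RC_minus, Cmod_RC.
     pose proof (cc_bound q A Hq N). pose proof (pow_le1 q N). pose proof (pow_le q N).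
     rewrite Rabs_pos_eq by lra. pose proof (Cmod_ge_0 (cc q A N)). pose proof (pow_le (Cmod z) N (Cmod_ge_0 z)).
     apply Rmult_le_compat_r; auto. nra.
   - replace 0 with (Mb q A * 0) by ring. apply (CV_mult (fun _ => Mb q A)). apply Un_cv_const.
     apply Un_cv_geom. split; [apply Cmod_ge_0|auto]. }
 pose proof (Cconv_unique _ _ _ H1 H2).
 apply Ceq_minus. rewrite H. reflexivity. Qed.

Lemma cc0 : cc q A 0 = RC 1.
Proof. unfold cc. simpl. apply injective_projections; simpl; field. Qed.

Lemma Sf_near1 w : Cmod w < 1 -> Cmod (Sf w - RC 1)%C <= sqrt 2 * (Mb q A * Cmod w / (1 - Cmod w)).
Proof. intros Hw. pose proof (Cmod_ge_0 w).
 apply (Cconv_mod_bound (fun N => sN q A w (S N))). apply (Cconv_S' (sN q A w)). apply Sf_conv; auto.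
 intros N. unfold sN. rewrite Csum_first, cc0.
 replace (RC 1 * w ^ 0 + Csum (fun k => cc q A (S k) * w ^ S k) N - RC 1)%C
   with (Csum (fun k => cc q A (S k) * w ^ S k) N)%C by (simpl; cring).
 eapply Rle_trans. apply (Csum_mod_le _ (fun k => Mb q A * Cmod w * Cmod w ^ k)).
 - intros k. rewrite Cmod_mult, Cmod_pow. simpl. rewrite <- Rmult_assoc. apply Rmult_le_compat_r.
   apply pow_le; auto. apply Rmult_le_compat_r; auto. apply cc_bound; auto.
 - apply Csum_geom_fst. split; auto.
   pose proof (Mb_pos q A). nra. Qed.

Lemma qbinomial z : Cmod z < 1 -> Cconv (sN q A z) (qpoch_inf (A * z) q / qpoch_inf z q)%C.
Proof. intros Hz. pose proof (Cmod_ge_0 z).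
 assert (Hw : forall m, Cmod (RC (q ^ m) * z)%C < 1).
 { intros m. rewrite Cmod_mult, Cmod_RC, Rabs_pos_eq by (apply pow_le; lra).
   pose proof (pow_le1 q m). pose proof (pow_le q m). nra. }
 assert (Iter : forall m, (qpoch z q m * Sf z = qpoch (A * z) q m * Sf (RC (q ^ m) * z))%C).
 { induction m.
   - rewrite !qpoch_O. change (q ^ 0) with 1. replace (RC 1 * z)%C with z by cring. cring.
   - rewrite !qpoch_S.
     replace (qpoch z q m * (RC 1 - z * RC (q ^ m)) * Sf z)%C with ((qpoch z q m * Sf z) * (RC 1 - RC (q ^ m) * z))%C by cring.
     rewrite IHm.
     replace (qpoch (A * z) q m * Sf (RC (q ^ m) * z) * (RC 1 - RC (q ^ m) * z))%C
       with (qpoch (A * z) q m * ((RC 1 - RC (q ^ m) * z) * Sf (RC (q ^ m) * z)))%C by cring.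
     rewrite Sf_diff by auto.
     replace (RC q * (RC (q ^ m) * z))%C with (RC (q ^ S m) * z)%C by (simpl; rewrite RC_mult; cring).
     cring. }
 assert (L1 : Cconv (fun m => qpoch z q m * Sf z)%C (qpoch_inf z q * Sf z)%C).
 { eapply Cconv_ext; [|apply Cconv_mult; [apply qpoch_conv; auto|apply Cconv_const]]. reflexivity. }
 assert (L2 : Cconv (fun m => Sf (RC (q ^ m) * z))%C (RC 1)).
 { assert (Cconv (fun m => Sf (RC (q ^ m) * z) - RC 1)%C (RC 0)).
   { apply Cconv_mod0 with (e := fun m => sqrt 2 * (Mb q A * Cmod z / (1 - Cmod z)) * q ^ m).
     - intros m. eapply Rle_trans; [apply Sf_near1; auto|].
       rewrite Cmod_mult, Cmod_RC, Rabs_pos_eq by (apply pow_le; lra).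
       pose proof (pow_le1 q m). pose proof (pow_le q m). pose proof (Mb_pos q A).
       rewrite Rmult_assoc. apply Rmult_le_compat_l. apply sqrt_pos.
       unfold Rdiv. 
       assert (0 < / (1 - q ^ m * Cmod z)) by (apply Rinv_0_lt_compat; nra).
       assert (/ (1 - q ^ m * Cmod z) <= / (1 - Cmod z)) by (apply Rinv_le_contravar; nra).
       assert (0 <= Mb q A * q ^ m * Cmod z) by (apply Rmult_le_pos; [nra|auto]).
       replace (Mb q A * (q ^ m * Cmod z) * / (1 - q ^ m * Cmod z)) with ((Mb q A * q ^ m * Cmod z) * / (1 - q ^ m * Cmod z)) by ring.
       replace (Mb q A * Cmod z * / (1 - Cmod z) * q ^ m) with ((Mb q A * q ^ m * Cmod z) * / (1 - Cmod z)) by ring.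
       apply Rmult_le_compat_l; auto.
     - replace 0 with (sqrt 2 * (Mb q A * Cmod z / (1 - Cmod z)) * 0) by ring.
       apply (CV_mult (fun _ => _)). apply Un_cv_const. apply Un_cv_geom. lra. }
   eapply Cconv_lim_eq; [|eapply Cconv_ext; [|apply (Cconv_plus _ _ _ _ H0 (Cconv_const (RC 1)))]]. cring. intros m. cbv beta. cring.
   }
 assert (L3 : Cconv (fun m => qpoch (A * z) q m * Sf (RC (q ^ m) * z))%C (qpoch_inf (A * z) q * RC 1)%C).
 { apply Cconv_mult; auto. apply qpoch_conv; auto. }
 assert (E : (qpoch_inf z q * Sf z = qpoch_inf (A * z) q * RC 1)%C).
 { apply (Cconv_unique _ _ _ L1). eapply Cconv_ext; [|exact L3]. intros m. symmetry. apply Iter. }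
 pose proof (qpoch_inf_nz z q Hq Hz).
 assert (Sf z = (qpoch_inf (A * z) q / qpoch_inf z q)%C).
 { transitivity ((qpoch_inf z q * Sf z) / qpoch_inf z q)%C. cfield; auto. rewrite E. cfield; auto. }
 rewrite <- H1. apply Sf_conv; auto. Qed.
End QBin2.

Open Scope R_scope.
Open Scope R_scope.

Definition conv (f g : nat -> Complex.C) n := Csum (fun k => f k * g (n - k)%nat)%C (S n).

Lemma infinite_sum_minus a b la lb : infinite_sum a la -> infinite_sum b lb ->
  infinite_sum (fun n => a n - b n) (la - lb).
Proof. intros Ha Hb. unfold infinite_sum in *.
 apply (Un_cv_ext (fun N => sum_f_R0 a N - sum_f_R0 b N)). intros; rewrite minus_sum; auto.
 apply (CV_minus (sum_f_R0 a) (sum_f_R0 b)); auto. Qed.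
Lemma infinite_sum_plus a b la lb : infinite_sum a la -> infinite_sum b lb ->
  infinite_sum (fun n => a n + b n) (la + lb).
Proof. intros Ha Hb. unfold infinite_sum in *.
 apply (Un_cv_ext (fun N => sum_f_R0 a N + sum_f_R0 b N)). intros; rewrite plus_sum; auto.
 apply (CV_plus (sum_f_R0 a) (sum_f_R0 b)); auto. Qed.
Lemma infinite_sum_ext a b l : (forall n, a n = b n) -> infinite_sum a l -> infinite_sum b l.
Proof. intros H Ha. unfold infinite_sum in *. eapply Un_cv_ext; [|exact Ha].
 intros N. apply sum_eq. intros; auto. Qed.

Lemma real_cauchy (a b : nat -> R) la lb K r : 0 <= r < 1 ->
  (forall k, Rabs (a k) <= K * r ^ k) -> (forall k, Rabs (b k) <= K * r ^ k) ->
  infinite_sum a la -> infinite_sum b lb ->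
  infinite_sum (fun n => sum_f_R0 (fun k => a k * b (n - k)%nat) n) (la * lb).
Proof. intros Hr Ha Hb Sa Sb. apply is_series_Reals. apply is_series_mult.
 apply is_series_Reals; auto. apply is_series_Reals; auto.
 apply (ex_series_dom _ K r Hr). intros k. rewrite Rabs_Rabsolu. auto.
 apply (ex_series_dom _ K r Hr). intros k. rewrite Rabs_Rabsolu. auto. Qed.

Lemma Cauchy_C f g F G K r : 0 <= r < 1 ->
  (forall k, Cmod (f k) <= K * r ^ k) -> (forall k, Cmod (g k) <= K * r ^ k) ->
  Cconv (Csum f) F -> Cconv (Csum g) G -> Cconv (Csum (conv f g)) (F * G)%C.
Proof. intros Hr Hf Hg SF SG.
 destruct (Cconv_Csum_to _ _ SF) as [F1 F2]. destruct (Cconv_Csum_to _ _ SG) as [G1 G2].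
 assert (B1 : forall (h : nat -> Complex.C) k, Cmod (h k) <= K * r ^ k -> Rabs (fst (h k)) <= K * r ^ k).
 { intros h k H. eapply Rle_trans; [apply fst_le_Cmod|auto]. }
 assert (B2 : forall (h : nat -> Complex.C) k, Cmod (h k) <= K * r ^ k -> Rabs (snd (h k)) <= K * r ^ k).
 { intros h k H. eapply Rle_trans; [apply snd_le_Cmod|auto]. }
 pose proof (real_cauchy _ _ _ _ K r Hr (fun k => B1 f k (Hf k)) (fun k => B1 g k (Hg k)) F1 G1) as RR.
 pose proof (real_cauchy _ _ _ _ K r Hr (fun k => B2 f k (Hf k)) (fun k => B2 g k (Hg k)) F2 G2) as II.
 pose proof (real_cauchy _ _ _ _ K r Hr (fun k => B1 f k (Hf k)) (fun k => B2 g k (Hg k)) F1 G2) as RI.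
 pose proof (real_cauchy _ _ _ _ K r Hr (fun k => B2 f k (Hf k)) (fun k => B1 g k (Hg k)) F2 G1) as IR.
 destruct F as [Fr Fi]. destruct G as [Gr Gi]. simpl in *.
 apply Cconv_Csum_of.
 - eapply infinite_sum_ext; [|apply (infinite_sum_minus _ _ _ _ RR II)].
   intros n. unfold conv. rewrite Csum_fst. rewrite <- minus_sum. apply sum_eq. intros. simpl. reflexivity.
 - eapply infinite_sum_ext; [|apply (infinite_sum_plus _ _ _ _ RI IR)].
   intros n. unfold conv. rewrite Csum_snd. rewrite <- plus_sum. apply sum_eq. intros. simpl. reflexivity.
Qed.

Open Scope R_scope.
Open Scope R_scope.
Open Scope C_scope.

Definition sh (f : nat -> Complex.C) k := match k with O => RC 0 | S k' => f k' end.

Lemma conv_ext f f' g g' n : (forall k, (k <= n)%nat -> f k = f' k) -> (forall k, (k <= n)%nat -> g k = g' k) ->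
  conv f g n = conv f' g' n.
Proof. intros Hf Hg. unfold conv. apply Csum_ext. intros k Hk. rewrite Hf, Hg by lia. reflexivity. Qed.

Lemma conv_sh_l f g n : conv (sh f) g (S n) = conv f g n.
Proof. unfold conv. rewrite Csum_first. simpl sh.
 rewrite (Csum_ext (fun k => f k * g (S n - S k)%nat) (fun k => f k * g (n - k)%nat)) by reflexivity.
 cring. Qed.

Lemma conv_sh_r f g n : conv f (sh g) (S n) = conv f g n.
Proof. unfold conv. rewrite Csum_S. replace (S n - S n)%nat with O by lia. simpl sh.
 rewrite (Csum_ext (fun k => f k * sh g (S n - k)%nat) (fun k => f k * g (n - k)%nat)).
 cring. intros k Hk. replace (S n - k)%nat with (S (n - k)) by lia. reflexivity. Qed.

Lemma conv_plus_l f1 f2 g n : conv (fun k => f1 k + f2 k) g n = conv f1 g n + conv f2 g n.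
Proof. unfold conv. rewrite <- Csum_plus. apply Csum_ext. intros; cring. Qed.
Lemma conv_plus_r f g1 g2 n : conv f (fun k => g1 k + g2 k) n = conv f g1 n + conv f g2 n.
Proof. unfold conv. rewrite <- Csum_plus. apply Csum_ext. intros; cring. Qed.
Lemma conv_scal_l c f g n : conv (fun k => c * f k) g n = c * conv f g n.
Proof. unfold conv. rewrite <- Csum_scal. apply Csum_ext. intros; cring. Qed.
Lemma conv_scal_r c f g n : conv f (fun k => c * g k) n = c * conv f g n.
Proof. unfold conv. rewrite <- Csum_scal. apply Csum_ext. intros; cring. Qed.
Lemma Cpow_add' (x : Complex.C) a b : x ^ (a + b) = x ^ a * x ^ b.
Proof. induction a; simpl; [cring|]. rewrite IHa. cring. Qed.

Lemma conv_qq (x : Complex.C) f g n : conv (fun k => x ^ k * f k) (fun k => x ^ k * g k) n = x ^ n * conv f g n.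
Proof. unfold conv. rewrite <- Csum_scal. apply Csum_ext. intros k Hk.
 replace n with (k + (n - k))%nat at 3 by lia. rewrite Cpow_add'. cring. Qed.

Section PRec.
Variables (q : R) (u c1 c2 : Complex.C).
Hypothesis Hq : (0 < q < 1)%R.
Hypothesis Hu : u <> RC 0.

Definition al k := cc q (c1 * / u) k * u ^ k.
Definition be k := cc q (c2 * u) k * (/ u) ^ k.
Definition pp n := conv al be n.

Lemma RCq_pow_nz k : RC (q ^ k) <> RC 0.
Proof. apply RC_neq. apply pow_nonzero. lra. Qed.
Lemma one_minus_qpow_nz k : (RC 1 - RC (q ^ S k)) <> RC 0.
Proof. rewrite <- RC_minus. apply RC_neq. pose proof (pow_le1 q k). pose proof (pow_le q k). simpl. nra. Qed.

Lemma cc_S_eq A k : cc q A (S k) = cc q A k * (RC 1 - A * RC (q ^ k)) / (RC 1 - RC (q ^ S k)).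
Proof. pose proof (cc_rec q A Hq k) as H. pose proof (one_minus_qpow_nz k).
 rewrite <- H. cfield. auto. Qed.

Lemma al_rec k : al k + (- u) * sh al k = RC q ^ k * al k + (- c1) * sh (fun j => RC q ^ j * al j) k.
Proof. destruct k.
 - simpl sh. unfold al. rewrite cc0. cring.
 - simpl sh. unfold al. rewrite cc_S_eq. rewrite <- !RC_pow. simpl. rewrite RC_mult.
   pose proof (one_minus_qpow_nz k). simpl in H. rewrite RC_mult in H. cfield. auto. Qed.

Lemma be_rec k : be k + (- / u) * sh be k = RC q ^ k * be k + (- c2) * sh (fun j => RC q ^ j * be j) k.
Proof. destruct k.
 - simpl sh. unfold be. rewrite cc0. cring.
 - simpl sh. unfold be. rewrite cc_S_eq. rewrite <- !RC_pow. simpl. rewrite RC_mult.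
   pose proof (one_minus_qpow_nz k). simpl in H. rewrite RC_mult in H. cfield. auto. Qed.

Lemma pp_rec n : pp (S (S n)) * (RC 1 - RC q ^ S (S n)) =
  (u + / u - (c1 + c2) * RC q ^ S n) * pp (S n) - (RC 1 - c1 * c2 * RC q ^ n) * pp n.
Proof.
 set (qal := fun j => RC q ^ j * al j). set (qbe := fun j => RC q ^ j * be j).
 assert (W : conv (fun k => al k + (- u) * sh al k) (fun k => be k + (- / u) * sh be k) (S (S n))
           = conv (fun k => qal k + (- c1) * sh qal k) (fun k => qbe k + (- c2) * sh qbe k) (S (S n))).
 { apply conv_ext; intros k _; [apply al_rec|apply be_rec]. }
 rewrite !conv_plus_l, !conv_plus_r, !conv_scal_l, !conv_scal_r, !conv_sh_l, !conv_sh_r in W.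
 unfold qal, qbe in W. rewrite !conv_qq in W. fold (pp n) (pp (S n)) (pp (S (S n))) in W.
 apply Ceq_minus. apply Ceq_minus in W. rewrite <- W. cfield. auto. Qed.

Lemma pp0 : pp 0 = RC 1.
Proof. unfold pp, conv. rewrite Csum_S, Csum_O. unfold al, be. simpl (0 - 0)%nat. rewrite !cc0. cring. Qed.
Lemma pp1 : pp 1 = (u + / u - c1 - c2) / (RC 1 - RC q).
Proof. unfold pp, conv. rewrite !Csum_S, Csum_O. unfold al, be. simpl (1 - 0)%nat. simpl (1 - 1)%nat.
 rewrite !cc_S_eq, !cc0. change (q ^ 0)%R with 1%R. replace (q ^ 1)%R with q by ring.
 assert (H := one_minus_qpow_nz 0). replace (q ^ 1)%R with q in H by ring. cfield. split; auto. Qed.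
End PRec.

Open Scope R_scope.
Open Scope R_scope.
Open Scope C_scope.

Lemma swap_nz a : RC 1 - a <> RC 0 -> a - RC 1 <> RC 0.
Proof. intros H E. apply H. replace (RC 1 - a) with (- (a - RC 1)) by cring. rewrite E. cring. Qed.

Lemma ES_alg (Cm Y W c1 c2 Q A B : Complex.C) :
  c1 <> RC 0 -> Q <> RC 0 -> A <> RC 0 -> B <> RC 0 ->
  RC 1 - Q * A <> RC 0 -> RC 1 - Q * (Q * A) <> RC 0 -> RC 1 - Q * B <> RC 0 ->
  RC 1 - c1 * c2 * B <> RC 0 -> RC 1 - / (Q * A) <> RC 0 ->
  let x := / (Q * A) in
  let g2 := Cm * (RC 1 - c1 * c2 * A) * (RC 1 - c1 * c2 * (Q * A)) / (c1 ^ 2 * (RC 1 - Q * A) * (RC 1 - Q * (Q * A)))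
            * ((RC 1 - x / Q) * Y) * (W * Q / ((RC 1 - Q * B) * (RC 1 - c1 * c2 * B))) in
  let g1s := Cm * (RC 1 - c1 * c2 * A) / (c1 * (RC 1 - Q * A)) * (Y * (RC 1 - x * B))
            * (W * Q / ((RC 1 - Q * B) * (RC 1 - c1 * c2 * B))) in
  let g1 := Cm * (RC 1 - c1 * c2 * A) / (c1 * (RC 1 - Q * A)) * Y * W in
  let g0 := Cm * (Y * (RC 1 - x * B) * (RC 1 - x * (Q * B)) / (RC 1 - x))
            * (W * Q / ((RC 1 - Q * B) * (RC 1 - c1 * c2 * B))) in
  g2 * (RC 1 - Q * (Q * A)) - g1s * (RC 1 + c1 ^ 2 * (Q * B) ^ 2) / (c1 * (Q * B)) + g1 / (c1 * B)
   + (c1 + c2) * (Q * A) * g1s + (RC 1 - c1 * c2 * A) * g0 = RC 0.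
Proof. intros. subst x g2 g1s g1 g0. cfield. repeat split; auto using swap_nz. Qed.

Lemma E0_alg (Cm c1 c2 Q A : Complex.C) :
  c1 <> RC 0 -> RC 1 - Q * A <> RC 0 -> RC 1 - Q * (Q * A) <> RC 0 ->
  let g2 := Cm * (RC 1 - c1 * c2 * A) * (RC 1 - c1 * c2 * (Q * A)) / (c1 ^ 2 * (RC 1 - Q * A) * (RC 1 - Q * (Q * A))) in
  let g1 := Cm * (RC 1 - c1 * c2 * A) / (c1 * (RC 1 - Q * A)) in
  g2 * (RC 1 - Q * (Q * A)) - g1 * (RC 1 + c1 ^ 2 * RC 1 ^ 2) / (c1 * RC 1) + RC 0
   + (c1 + c2) * (Q * A) * g1 + (RC 1 - c1 * c2 * A) * Cm = RC 0.
Proof. intros. subst g2 g1. cfield. repeat split; auto using swap_nz. Qed.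

Section QRec.
Variables (q : R) (u c1 c2 : Complex.C).
Hypothesis Hq : (0 < q < 1)%R.
Hypothesis Hu : u <> RC 0.
Hypothesis Hc1 : c1 <> RC 0.
Hypothesis Hcc : forall j, RC 1 - c1 * c2 * RC (q ^ j) <> RC 0.

Definition phi j := qpoch (c1 * u) q j * qpoch (c1 * / u) q j.
Definition Cn n := qpoch (c1 * c2) q n / (c1 ^ n * qpoch (RC q) q n).
Definition Dq n j := qpoch (RC (/ q ^ n)) q j.
Definition Wt j := RC (q ^ j) / (qpoch (RC q) q j * qpoch (c1 * c2) q j).
Definition gam n j := Cn n * Dq n j * Wt j.
Definition rr n := Csum (fun j => gam n j * phi j) (S n).

Lemma cc_nz n : qpoch (c1 * c2) q n <> RC 0.
Proof. apply qpoch_nz. intros j _. apply Hcc. Qed.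
Lemma c1pow_nz n : c1 ^ n <> RC 0.
Proof. apply Cpow_nz; auto. Qed.
Lemma RCq_nz : RC q <> RC 0.
Proof. apply RC_neq. lra. Qed.
Lemma qpow_nz' n : RC (q ^ n) <> RC 0.
Proof. apply RC_neq. apply pow_nonzero. lra. Qed.
Lemma RC_qS n : RC (q ^ S n) = RC q * RC (q ^ n).
Proof. simpl. apply RC_mult. Qed.
Lemma RC_qinvS n : RC (/ q ^ S n) = / (RC q * RC (q ^ n)).
Proof. rewrite <- RC_qS. apply RtoC_inv. apply pow_nonzero. lra. Qed.
Lemma qfac_nz n : RC 1 - RC q * RC (q ^ n) <> RC 0.
Proof. apply qq_factor_nz; auto. Qed.
Lemma qinv_fac_nz n : RC 1 - / (RC q * RC (q ^ n)) <> RC 0.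
Proof. rewrite <- RC_qinvS, <- RC_minus. apply RC_neq.
 assert (q ^ S n < 1)%R. { pose proof (pow_le1 q n). pose proof (pow_le q n). simpl. nra. }
 assert (0 < q ^ S n)%R by (apply pow_lt; lra).
 assert (1 < / q ^ S n)%R. { rewrite <- Rinv_1. apply Rinv_lt_contravar; lra. } lra. Qed.

Lemma qpoch_front x k : qpoch x q (S k) = (RC 1 - x) * qpoch (x * RC q) q k.
Proof. induction k.
 - rewrite qpoch_S, !qpoch_O. change (q ^ 0)%R with 1%R. cring.
 - rewrite qpoch_S, IHk, qpoch_S, RC_qS. cring. Qed.

Lemma Cn_S n : Cn (S n) = Cn n * (RC 1 - c1 * c2 * RC (q ^ n)) / (c1 * (RC 1 - RC q * RC (q ^ n))).
Proof. unfold Cn. rewrite !qpoch_S. simpl Cpow.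
 pose proof (cc_nz n). pose proof (c1pow_nz n). pose proof (qq_nz q n Hq). pose proof (qfac_nz n).
 change (c1 ^ S n) with (c1 * c1 ^ n). cfield. repeat split; auto. Qed.
Lemma Wt_S j : Wt (S j) = Wt j * RC q / ((RC 1 - RC q * RC (q ^ j)) * (RC 1 - c1 * c2 * RC (q ^ j))).
Proof. unfold Wt. rewrite !qpoch_S, RC_qS.
 pose proof (cc_nz j). pose proof (qq_nz q j Hq). pose proof (qfac_nz j). pose proof (Hcc j).
 cfield. repeat split; auto. Qed.
Lemma Dq_S n i : Dq n (S i) = Dq n i * (RC 1 - RC (/ q ^ n) * RC (q ^ i)).
Proof. unfold Dq. apply qpoch_S. Qed.
Lemma Dq_front n i : Dq (S n) (S i) = (RC 1 - RC (/ q ^ S n)) * Dq n i.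
Proof. unfold Dq. rewrite qpoch_front. f_equal. f_equal. rewrite <- RC_mult. f_equal.
 simpl. field. split; [apply pow_nonzero|]; lra. Qed.

Lemma Dq_zero n j : (n < j)%nat -> Dq n j = RC 0.
Proof. intros H. unfold Dq. replace j with (S n + (j - S n))%nat by lia. rewrite qpoch_add, qpoch_S.
 rewrite <- RC_mult, Rinv_l by (apply pow_nonzero; lra). cring. Qed.

Lemma rr_ext n N : (n < N)%nat -> rr n = Csum (fun j => gam n j * phi j) N.
Proof. intros H. unfold rr. symmetry. apply Csum_extend. lia. intros k Hk _.
 unfold gam. rewrite Dq_zero by lia. cring. Qed.

Lemma phi_S j : (u + / u) * phi j = ((RC 1 + c1 ^ 2 * RC (q ^ j) ^ 2) * phi j - phi (S j)) / (c1 * RC (q ^ j)).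
Proof. unfold phi. rewrite !qpoch_S. pose proof (qpow_nz' j). cfield. auto. Qed.

Lemma ES m i :
  gam (S (S m)) (S i) * (RC 1 - RC (q ^ S (S m)))
  - gam (S m) (S i) * (RC 1 + c1 ^ 2 * RC (q ^ S i) ^ 2) / (c1 * RC (q ^ S i))
  + gam (S m) i / (c1 * RC (q ^ i))
  + (c1 + c2) * RC (q ^ S m) * gam (S m) (S i) + (RC 1 - c1 * c2 * RC (q ^ m)) * gam m (S i) = RC 0.
Proof.
 pose proof (ES_alg (Cn m) (Dq (S m) i) (Wt i) c1 c2 (RC q) (RC (q ^ m)) (RC (q ^ i)) Hc1 RCq_nz (qpow_nz' m) (qpow_nz' i)
   (qfac_nz m) ltac:(rewrite <- RC_qS; apply qfac_nz) (qfac_nz i) (Hcc i) (qinv_fac_nz m)) as E.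
 cbv zeta in E. rewrite <- E. clear E.
 unfold gam. rewrite !Cn_S, !Wt_S, (Dq_front (S m) i), (Dq_S (S m) i).
 replace (Dq m (S i)) with (Dq (S m) i * (RC 1 - RC (/ q ^ S m) * RC (q ^ i)) * (RC 1 - RC (/ q ^ S m) * RC (q ^ S i)) / (RC 1 - RC (/ q ^ S m))).
 2:{ pose proof (Dq_front m (S i)) as F.
     assert (F2 : Dq (S m) (S (S i)) = Dq (S m) i * (RC 1 - RC (/ q ^ S m) * RC (q ^ i)) * (RC 1 - RC (/ q ^ S m) * RC (q ^ S i)))
       by (rewrite !Dq_S; reflexivity).
     rewrite <- F2, F. pose proof (qinv_fac_nz m). rewrite <- RC_qinvS in H. cfield. auto. }
 rewrite !RC_qinvS, !RC_qS.
 pose proof (qpow_nz' m). pose proof (qpow_nz' i). pose proof RCq_nz. pose proof (qfac_nz m).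
 pose proof (qfac_nz i). pose proof (Hcc i). pose proof (qinv_fac_nz m).
 assert (RC 1 - RC q * (RC q * RC (q ^ m)) <> RC 0) by (rewrite <- RC_qS; apply qfac_nz).
 assert (RC 1 - c1 * c2 * (RC q * RC (q ^ m)) <> RC 0) by (rewrite <- RC_qS; apply Hcc).
 cfield. repeat split; auto using swap_nz. Qed.

Lemma E0 m :
  gam (S (S m)) 0 * (RC 1 - RC (q ^ S (S m)))
  - gam (S m) 0 * (RC 1 + c1 ^ 2 * RC (q ^ 0) ^ 2) / (c1 * RC (q ^ 0))
  + RC 0
  + (c1 + c2) * RC (q ^ S m) * gam (S m) 0 + (RC 1 - c1 * c2 * RC (q ^ m)) * gam m 0 = RC 0.
Proof.
 pose proof (E0_alg (Cn m) c1 c2 (RC q) (RC (q ^ m)) Hc1 (qfac_nz m) ltac:(rewrite <- RC_qS; apply qfac_nz)) as E.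
 cbv zeta in E. rewrite <- E. clear E.
 unfold gam, Dq, Wt. rewrite !Cn_S, !qpoch_O. change (q ^ 0)%R with 1%R. rewrite !RC_qS.
 pose proof (qpow_nz' m). pose proof RCq_nz. pose proof (qfac_nz m).
 assert (RC 1 - RC q * (RC q * RC (q ^ m)) <> RC 0) by (rewrite <- RC_qS; apply qfac_nz).
 assert (RC 1 - c1 * c2 * (RC q * RC (q ^ m)) <> RC 0) by (rewrite <- RC_qS; apply Hcc).
 cfield. repeat split; auto using swap_nz. Qed.

Lemma Csum_shift_sh (b f : nat -> Complex.C) N : b N = RC 0 \/ f (S N) = RC 0 ->
  Csum (fun j => b j * f (S j)) (S N) = Csum (fun j => sh b j * f j) (S N).
Proof. intros H. rewrite (Csum_first (fun j => sh b j * f j)). simpl sh.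
 rewrite (Csum_S (fun j => b j * f (S j))).
 destruct H as [H|H]; rewrite H; cring. Qed.

Lemma rr_rec m : rr (S (S m)) * (RC 1 - RC (q ^ S (S m))) =
  (u + / u - (c1 + c2) * RC (q ^ S m)) * rr (S m) - (RC 1 - c1 * c2 * RC (q ^ m)) * rr m.
Proof.
 set (N := S (S (S m))).
 rewrite (rr_ext (S (S m)) N), (rr_ext (S m) N), (rr_ext m N) by (unfold N; lia).
 set (a := fun j => gam (S m) j * (RC 1 + c1 ^ 2 * RC (q ^ j) ^ 2) / (c1 * RC (q ^ j))).
 set (b := fun j => gam (S m) j / (c1 * RC (q ^ j))).
 assert (H4 : (u + / u) * Csum (fun j => gam (S m) j * phi j) N
              = Csum (fun j => a j * phi j) N - Csum (fun j => sh b j * phi j) N).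
 { rewrite <- Csum_scal.
   rewrite (Csum_ext _ (fun j => a j * phi j + - (b j * phi (S j)))).
   2:{ intros j _. unfold a, b. rewrite Cmult_assoc, (Cmult_comm (u + / u)), <- Cmult_assoc, phi_S.
       pose proof (qpow_nz' j). cfield. split; auto. }
   rewrite Csum_plus, Csum_opp. unfold N. rewrite Csum_shift_sh. reflexivity.
   left. unfold b. unfold gam. rewrite Dq_zero by lia. unfold Complex.Cdiv. cring. }
 assert (Z : Csum (fun j => (RC 1 - RC (q ^ S (S m))) * (gam (S (S m)) j * phi j) + (- (a j * phi j) +
           (sh b j * phi j + (((c1 + c2) * RC (q ^ S m)) * (gam (S m) j * phi j) +
            (RC 1 - c1 * c2 * RC (q ^ m)) * (gam m j * phi j))))) N = RC 0).
 { apply Csum_zero. intros j _. destruct j.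
   - pose proof (E0 m) as E. simpl sh. unfold a.
     transitivity ((gam (S (S m)) 0 * (RC 1 - RC (q ^ S (S m)))
       - gam (S m) 0 * (RC 1 + c1 ^ 2 * RC (q ^ 0) ^ 2) / (c1 * RC (q ^ 0)) + RC 0
       + (c1 + c2) * RC (q ^ S m) * gam (S m) 0 + (RC 1 - c1 * c2 * RC (q ^ m)) * gam m 0) * phi 0).
     + pose proof (qpow_nz' 0). cfield. auto.
     + rewrite E. cring.
   - pose proof (ES m j) as E. simpl sh. unfold a, b.
     transitivity ((gam (S (S m)) (S j) * (RC 1 - RC (q ^ S (S m)))
       - gam (S m) (S j) * (RC 1 + c1 ^ 2 * RC (q ^ S j) ^ 2) / (c1 * RC (q ^ S j))
       + gam (S m) j / (c1 * RC (q ^ j))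
       + (c1 + c2) * RC (q ^ S m) * gam (S m) (S j) + (RC 1 - c1 * c2 * RC (q ^ m)) * gam m (S j)) * phi (S j)).
     + pose proof (qpow_nz' j). pose proof (qpow_nz' (S j)). cfield. auto.
     + rewrite E. cring. }
 rewrite !Csum_plus, !Csum_scal, Csum_opp in Z.
 apply Ceq_minus. rewrite <- Z.
 replace ((u + / u - (c1 + c2) * RC (q ^ S m)) * Csum (fun j => gam (S m) j * phi j) N)
   with ((u + / u) * Csum (fun j => gam (S m) j * phi j) N - (c1 + c2) * RC (q ^ S m) * Csum (fun j => gam (S m) j * phi j) N) by cring.
 rewrite H4. cring. Qed.

Lemma rr0 : rr 0 = RC 1.
Proof. unfold rr. rewrite Csum_S, Csum_O. unfold gam, Cn, Dq, Wt, phi. rewrite !qpoch_O.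
 change (q ^ 0)%R with 1%R. cfield. Qed.
Lemma rr1 : rr 1 = (u + / u - c1 - c2) / (RC 1 - RC q).
Proof. unfold rr. rewrite !Csum_S, Csum_O. unfold gam, Cn, Dq, Wt, phi.
 rewrite !qpoch_S, !qpoch_O. change (q ^ 0)%R with 1%R. change (c1 ^ 1) with (c1 * RC 1).
 replace (q ^ 1)%R with q by ring. rewrite RtoC_inv by lra.
 pose proof (Hcc 0) as H0. change (q ^ 0)%R with 1%R in H0.
 assert (RC 1 - RC q * RC 1 <> RC 0) by (pose proof (qfac_nz 0) as X; change (q ^ 0)%R with 1%R in X; exact X).
 pose proof RCq_nz. cfield. repeat split; auto using swap_nz. all: try (rewrite Cmult_1_r in H0; exact H0). rewrite <- RC_minus. apply RC_neq. lra.
Qed.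
End QRec.

Open Scope R_scope.
Open Scope R_scope.
Open Scope C_scope.

Section GF.
Variables (q : R) (u c1 c2 : Complex.C).
Hypothesis Hq : (0 < q < 1)%R.
Hypothesis Hu : u <> RC 0.
Hypothesis Hmod : Cmod u = 1%R.
Hypothesis Hc1 : c1 <> RC 0.
Hypothesis Hcc : forall j, RC 1 - c1 * c2 * RC (q ^ j) <> RC 0.

Lemma rr_pp n : rr q u c1 c2 n = pp q u c1 c2 n.
Proof.
 assert (H : forall n, rr q u c1 c2 n = pp q u c1 c2 n /\ rr q u c1 c2 (S n) = pp q u c1 c2 (S n)).
 { induction n0.
   - rewrite rr0, rr1, pp0, pp1 by auto. split; reflexivity.
   - destruct IHn0 as [E1 E2]. split; auto.
     pose proof (rr_rec q u c1 c2 Hq Hu Hc1 Hcc n0) as R1.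
     pose proof (pp_rec q u c1 c2 Hq Hu n0) as R2.
     rewrite <- !RC_pow in R2. rewrite <- E1, <- E2 in R2. rewrite <- R2 in R1.
     assert (RC 1 - RC (q ^ S (S n0)) <> RC 0) by (apply one_minus_qpow_nz; auto).
     transitivity (rr q u c1 c2 (S (S n0)) * (RC 1 - RC (q ^ S (S n0))) / (RC 1 - RC (q ^ S (S n0)))).
     cfield; auto. rewrite R1. cfield; auto. }
 apply H. Qed.

Lemma Cmod_tu (t : R) : (0 <= t)%R -> Cmod (RC t * u) = t.
Proof. intros Ht. rewrite Cmod_mult, Hmod, Cmod_RC, Rabs_pos_eq; lra. Qed.
Lemma Cmod_tiu (t : R) : (0 <= t)%R -> Cmod (RC t * / u) = t.
Proof. intros Ht. rewrite Cmod_mult, Cmod_inv, Hmod, Cmod_RC, Rabs_pos_eq by auto. lra. Qed.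

Lemma GF (t : R) : (0 <= t < 1)%R ->
  Cconv (Csum (fun n => RC (t ^ n) * rr q u c1 c2 n))
    (qpoch_inf (c1 * RC t) q * qpoch_inf (c2 * RC t) q / (qpoch_inf (RC t * u) q * qpoch_inf (RC t * / u) q)).
Proof. intros Ht.
 set (f := fun k => cc q (c1 * / u) k * (RC t * u) ^ k).
 set (g := fun k => cc q (c2 * u) k * (RC t * / u) ^ k).
 set (K := (Mb q (c1 * / u) + Mb q (c2 * u))%R).
 pose proof (Mb_pos q (c1 * / u)). pose proof (Mb_pos q (c2 * u)).
 assert (Bf : forall k, (Cmod (f k) <= K * t ^ k)%R).
 { intros k. unfold f. rewrite Cmod_mult, Cmod_pow, Cmod_tu by lra.
   apply Rmult_le_compat_r. apply pow_le; lra. pose proof (cc_bound q (c1 * / u) Hq k). unfold K. lra. }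
 assert (Bg : forall k, (Cmod (g k) <= K * t ^ k)%R).
 { intros k. unfold g. rewrite Cmod_mult, Cmod_pow, Cmod_tiu by lra.
   apply Rmult_le_compat_r. apply pow_le; lra. pose proof (cc_bound q (c2 * u) Hq k). unfold K. lra. }
 pose proof (qbinomial q (c1 * / u) Hq (RC t * u) ltac:(rewrite Cmod_tu; lra)) as Sf.
 pose proof (qbinomial q (c2 * u) Hq (RC t * / u) ltac:(rewrite Cmod_tiu; lra)) as Sg.
 pose proof (Cauchy_C f g _ _ K t Ht Bf Bg Sf Sg) as P.
 replace (c1 * / u * (RC t * u)) with (c1 * RC t) in P by (cfield; auto).
 replace (c2 * u * (RC t * / u)) with (c2 * RC t) in P by (cfield; auto).
 assert (N1 : qpoch_inf (RC t * u) q <> RC 0) by (apply qpoch_inf_nz; auto; rewrite Cmod_tu; lra).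
 assert (N2 : qpoch_inf (RC t * / u) q <> RC 0) by (apply qpoch_inf_nz; auto; rewrite Cmod_tiu; lra).
 eapply Cconv_lim_eq; [|eapply Cconv_ext; [|exact P]].
 - cfield. split; auto.
 - intros n. cbv beta. apply Csum_ext. intros k _. rewrite rr_pp. unfold pp. unfold conv.
   rewrite <- Csum_scal. apply Csum_ext. intros j Hj. unfold f, g, al, be.
   rewrite !Cpow_mult_l, <- !RC_pow.
   replace (t ^ k)%R with (t ^ j * t ^ (k - j))%R by (rewrite <- pow_add; f_equal; lia).
   rewrite RC_mult. cring.
Qed.
End GF.

Open Scope R_scope.
Open Scope R_scope.
Open Scope C_scope.

Lemma qpoch_zero_arg q k : qpoch Czero q k = RC 1.
Proof. induction k; [reflexivity|]. rewrite qpoch_S, IHk. toC. cring. Qed.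

Lemma littleq_form n x a b q : little_qJacobi n x a b q =
  Csum (fun j => qpoch (RC (/ q ^ n)) q j * qpoch (RC (a * b * q ^ S n)) q j /
     (qpoch (RC q) q j * qpoch (RC (a * q)) q j) * RC (q * x) ^ j) (S n).
Proof. unfold little_qJacobi, phi_trunc. apply Csum_ext. intros j _. unfold phi_term.
 cbv zeta. match goal with |- context [powerRZ ?x ?e] => replace e with 0%Z by reflexivity end.
 rewrite powerRZ_O. unfold qpochs. cbn [fold_right]. toC. rewrite !Cmult_1_r, Cmult_1_l. reflexivity. Qed.

Lemma Cexpi_neg t : Cexpi (- t) = / Cexpi t.
Proof. unfold Cexpi. rewrite cos_neg, sin_neg. unfold Complex.Cinv. simpl fst; simpl snd.
 assert (E : (cos t ^ 2 + sin t ^ 2 = 1)%R) by (pose proof (sin2_cos2 t); unfold Rsqr in H; nra).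
 rewrite E. apply injective_projections; simpl; field. Qed.

Lemma Cexpi_nz t : Cexpi t <> RC 0.
Proof. intros E. injection E. intros. pose proof (sin2_cos2 t). unfold Rsqr in H1. rewrite H, H0 in H1. lra. Qed.
Lemma Cexpi_mod t : Cmod (Cexpi t) = 1%R.
Proof. unfold Cmod, Cexpi. simpl fst; simpl snd. rewrite <- sqrt_1. f_equal.
 pose proof (sin2_cos2 t). unfold Rsqr in H. simpl. lra. Qed.

Lemma asc_form k th c1 c2 q : (0 < q < 1)%R -> c1 <> RC 0 -> (forall j, RC 1 - c1 * c2 * RC (q ^ j) <> RC 0) ->
  al_salam_chihara k th c1 c2 q = qpoch (RC q) q k * rr q (Cexpi th) c1 c2 k.
Proof. intros Hq Hc1 Hcc. unfold al_salam_chihara, phi_trunc, rr.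
 toC. rewrite <- Csum_scal, <- Csum_scal. apply Csum_ext. intros j _. unfold phi_term.
 cbv zeta. match goal with |- context [powerRZ ?x ?e] => replace e with 0%Z by reflexivity end.
 rewrite powerRZ_O. unfold qpochs. cbn [fold_right]. toC. rewrite !Cmult_1_r, Cmult_1_l.
 rewrite qpoch_zero_arg, Cmult_1_r. rewrite Cexpi_neg. unfold gam, Cn, Dq, Wt, phi.
 rewrite <- RC_pow.
 pose proof (cc_nz q c1 c2 Hcc k). pose proof (cc_nz q c1 c2 Hcc j). pose proof (c1pow_nz c1 Hc1 k).
 pose proof (qq_nz q k Hq). pose proof (qq_nz q j Hq).
 cfield. repeat split; auto. Qed.

Lemma aw_form n th a1 a2 a3 a4 q : askey_wilson n th a1 a2 a3 a4 q =
  (qpoch (a1 * a2) q n * (qpoch (a1 * a3) q n * qpoch (a1 * a4) q n)) / a1 ^ n *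
  Csum (fun j => (qpoch (RC (/ q ^ n)) q j * (qpoch (a1 * a2 * a3 * a4 * RC (powerRZ q (Z.of_nat n - 1))) q j *
      (qpoch (a1 * Cexpi th) q j * qpoch (a1 * / Cexpi th) q j))) /
      (qpoch (RC q) q j * (qpoch (a1 * a2) q j * (qpoch (a1 * a3) q j * qpoch (a1 * a4) q j))) * RC q ^ j) (S n).
Proof. unfold askey_wilson, phi_trunc. unfold qpochs. cbn [fold_right]. toC. rewrite !Cmult_1_r.
 f_equal. apply Csum_ext. intros j _. unfold phi_term.
 cbv zeta. match goal with |- context [powerRZ ?x ?e] => replace e with 0%Z by reflexivity end.
 rewrite powerRZ_O. unfold qpochs. cbn [fold_right]. toC. rewrite !Cmult_1_r, Cmult_1_l.
 rewrite Cexpi_neg. reflexivity. Qed.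

Lemma series_fin (F : nat -> nat -> Complex.C) (L : nat -> Complex.C) M :
  (forall j, (j < M)%nat -> Cconv (Csum (F j)) (L j)) ->
  Cconv (Csum (fun k => Csum (fun j => F j k) M)) (Csum L M).
Proof. induction M; intros H.
 - eapply Cconv_ext; [|apply (Cconv_const (RC 0))]. intros N. cbv beta. symmetry. apply Csum_zero. intros; reflexivity.
 - eapply Cconv_ext; [|apply Cconv_plus; [apply IHM; intros; apply H; lia|apply (H M); lia]].
   intros N. cbv beta. rewrite <- Csum_plus. apply Csum_ext. intros k _. reflexivity. Qed.

Definition Gf q u c1 c2 t := qpoch_inf (c1 * RC t) q * qpoch_inf (c2 * RC t) q /
   (qpoch_inf (RC t * u) q * qpoch_inf (RC t * / u) q).

Lemma Gf_shift q u c1 c2 t j : (0 < q < 1)%R -> (0 <= t < 1)%R -> Cmod u = 1%R -> u <> RC 0 ->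
  qpoch (c1 * RC t) q j <> RC 0 -> qpoch (c2 * RC t) q j <> RC 0 ->
  Gf q u c1 c2 (t * q ^ j) = Gf q u c1 c2 t * (qpoch (RC t * u) q j * qpoch (RC t * / u) q j) /
     (qpoch (c1 * RC t) q j * qpoch (c2 * RC t) q j).
Proof. intros Hq Ht Hm Hu N1 N2. unfold Gf.
 assert (Ht' : (0 <= t * q ^ j < 1)%R).
 { pose proof (pow_le1 q j). pose proof (pow_le q j). split; nra. }
 rewrite (qpoch_inf_split (c1 * RC t) q j Hq), (qpoch_inf_split (c2 * RC t) q j Hq),
   (qpoch_inf_split (RC t * u) q j Hq), (qpoch_inf_split (RC t * / u) q j Hq).
 rewrite !RC_mult.
 replace (c1 * (RC t * RC (q ^ j))) with (c1 * RC t * RC (q ^ j)) by cring.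
 replace (c2 * (RC t * RC (q ^ j))) with (c2 * RC t * RC (q ^ j)) by cring.
 replace (RC t * RC (q ^ j) * u) with (RC t * u * RC (q ^ j)) by cring.
 replace (RC t * RC (q ^ j) * / u) with (RC t * / u * RC (q ^ j)) by cring.
 assert (Z1 : qpoch_inf (RC t * u * RC (q ^ j)) q <> RC 0).
 { apply qpoch_inf_nz; auto. rewrite !Cmod_mult, Hm, !Cmod_RC, !Rabs_pos_eq by (try apply pow_le; lra).
   pose proof (pow_le1 q j). pose proof (pow_le q j). nra. }
 assert (Z2 : qpoch_inf (RC t * / u * RC (q ^ j)) q <> RC 0).
 { apply qpoch_inf_nz; auto. rewrite Cmod_mult, Cmod_mult, (Cmod_inv u Hu), Hm, !Cmod_RC, !Rabs_pos_eq by (try apply pow_le; lra).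
   pose proof (pow_le1 q j). pose proof (pow_le q j). rewrite Rinv_1. nra. }
 assert (Z3 : qpoch (RC t * u) q j <> RC 0).
 { intros E. pose proof (qpoch_inf_nz (RC t * u) q Hq) as X. rewrite (qpoch_inf_split _ q j Hq), E in X.
   apply X. rewrite Cmod_mult, Hm, Cmod_RC, Rabs_pos_eq; lra. cring. }
 assert (Z4 : qpoch (RC t * / u) q j <> RC 0).
 { intros E. pose proof (qpoch_inf_nz (RC t * / u) q Hq) as X. rewrite (qpoch_inf_split _ q j Hq), E in X.
   apply X. rewrite Cmod_mult, (Cmod_inv u Hu), Hm, Cmod_RC, Rabs_pos_eq by lra. rewrite Rinv_1. lra. cring. }
 cfield. repeat split; auto. Qed.

Open Scope R_scope.
Open Scope R_scope.

Lemma powerRZ_pred q n : q <> 0 -> powerRZ q (Z.of_nat n - 1) * q = q ^ n.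
Proof. intros Hq. rewrite pow_powerRZ.
 replace (Z.of_nat n) with ((Z.of_nat n - 1) + 1)%Z at 2 by lia.
 rewrite powerRZ_add by auto. simpl. ring. Qed.

Lemma neq_one_minus (w : Complex.C) : w <> RC 1 -> (RC 1 - w)%C <> RC 0.
Proof. intros H E. apply H. apply Ceq_minus in E. symmetry. apply Ceq_minus.
 rewrite <- E. cring. Qed.

Close Scope C_scope.
Open Scope R_scope.

Theorem mainTheorem7 (q a b alpha : R) (c : Cplx) (n : nat) (theta : R)
  (hq0 : 0 < q) (hq1 : q < 1)
  (ha0 : 0 < a) (ha1 : a < / q)
  (hb : b < / q)
  (hc : c <> Czero)
  (hnd1 : forall m : nat, (1 <= m)%nat ->
          Cmul (RtoC (alpha * a * q ^ m)) c <> Cone)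
  (hnd2 : forall m : nat, (1 <= m)%nat ->
          Cdiv (RtoC (alpha * b * q ^ m)) c <> Cone)
  (hal1 : sqrt (a * q) < alpha) (hal2 : alpha < / sqrt (a * q))
  (hth0 : 0 <= theta) (hth1 : theta <= PI) :
  let c1 := Cmul c (RtoC (sqrt (a * q))) in
  let c2 := Cmul (Cdiv (RtoC b) c) (RtoC (sqrt (q / a))) in
  Cseries_conv
    (fun k => Cmul (Cmul (RtoC (alpha ^ k)) (little_qJacobi n (q ^ k) a b q))
                   (Cmul (Cdiv (RtoC (sqrt (a * q) ^ k)) (qpoch (RtoC q) q k))
                         (al_salam_chihara k theta c1 c2 q)))
    (Cmul
       (Cdiv
          (Cmul (RtoC (alpha ^ n * sqrt (a * q) ^ n))
                (Cmul (qpoch_inf (Cmul (RtoC (alpha * a * q ^ (S n))) c) q)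
                      (qpoch_inf (Cdiv (RtoC (alpha * b * q ^ (S n))) c) q)))
          (Cmul (qpoch (RtoC (a * q)) q n)
                (Cmul (qpoch_inf (Cmul (RtoC (alpha * sqrt (a * q))) (Cexpi theta)) q)
                      (qpoch_inf (Cmul (RtoC (alpha * sqrt (a * q))) (Cexpi (- theta))) q))))
       (askey_wilson n theta (RtoC (alpha * sqrt (a * q))) c1 c2
                     (RtoC (sqrt (a * q) / alpha)) q)).
Proof.
 cbv zeta. unfold Cseries_conv.
 assert (Hq : 0 < q < 1) by lra.
 assert (Haq : 0 < a * q) by nra.
 set (s := sqrt (a * q)) in *.
 assert (Hs : 0 < s) by (apply sqrt_lt_R0; auto).
 assert (Hss : s * s = a * q) by (apply sqrt_sqrt; lra).
 assert (Hsqa : sqrt (q / a) = q / s).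
 { apply sqrt_lem_1. apply Rlt_le, Rdiv_lt_0_compat; lra. apply Rlt_le, Rdiv_lt_0_compat; lra.
   replace (q / s * (q / s)) with (q * q / (s * s)) by (field; lra). rewrite Hss. field. lra. }
 assert (Hal : 0 < alpha) by lra.
 assert (Ht1 : alpha * s < 1).
 { apply (Rmult_lt_compat_r s) in hal2; auto. rewrite Rinv_l in hal2; lra. }
 rewrite Hsqa. set (t := alpha * s) in *.
 assert (Ht : 0 <= t < 1) by (split; [unfold t; nra|lra]).
 toC.
 set (u := Cexpi theta).
 assert (Hu : u <> RC 0) by apply Cexpi_nz.
 assert (Hm : Cmod u = 1) by apply Cexpi_mod.
 rewrite !Cexpi_neg. fold u.
 set (C1 := (c * RC s)%C).
 set (C2 := (RC b / c * RC (q / s))%C).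
 assert (Hcz : c <> RC 0) by exact hc.
 assert (HC1 : C1 <> RC 0) by (apply Cmult_neq_0; auto; apply RC_neq; lra).
 assert (HC12 : (C1 * C2)%C = RC (b * q)).
 { unfold C1, C2. rewrite RC_mult, RtoC_div by lra. cfield. split; auto. apply RC_neq; lra. }
 assert (HCC : forall j, (RC 1 - C1 * C2 * RC (q ^ j))%C <> RC 0).
 { intros j. rewrite HC12, <- RC_mult, <- RC_minus. apply RC_neq.
   pose proof (pow_le1 q j). pose proof (pow_le q j).
   assert (b * q < 1). { apply (Rmult_lt_compat_r q) in hb; auto. rewrite Rinv_l in hb; lra. }
   assert (b * q * q ^ j < 1).
   { destruct (Rle_lt_dec b 0).
     - assert (0 <= q * q ^ j) by (apply Rmult_le_pos; lra).
       assert (b * (q * q ^ j) <= 0) by (apply Rmult_le_0_r; lra). lra.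
     - assert (0 <= b * q * (1 - q ^ j)) by (apply Rmult_le_pos; [apply Rmult_le_pos|]; lra). lra. }
   lra. }
 set (A := fun j => (qpoch (RC (/ q ^ n)) q j * qpoch (RC (a * b * q ^ S n)) q j / (qpoch (RC q) q j * qpoch (RC (a * q)) q j))%C).
 set (F := fun j k => ((A j * RC (q ^ j)) * (RC ((t * q ^ j) ^ k) * rr q u C1 C2 k))%C).
 apply Cconv_ext with (u := fun N => Csum (fun k => Csum (fun j => F j k) (S n)) N).
 { intros N. apply Csum_ext. intros k _. rewrite Cdiv_eqC, littleq_form, asc_form by auto. fold u.
   symmetry.
   transitivity (Csum (fun j => (RC (alpha ^ k) * (RC (s ^ k) / qpoch (RC q) q k * (qpoch (RC q) q k * rr q u C1 C2 k))) * (A j * RC (q * q ^ k) ^ j))%C (S n)).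
   - rewrite Csum_scal. unfold A. unfold Complex.Cdiv. cring.
   - apply Csum_ext. intros j _. unfold F. rewrite <- RC_pow.
     replace ((q * q ^ k) ^ j) with (q ^ j * (q ^ j) ^ k) by (rewrite Rpow_mult_distr, <- !pow_mult, Nat.mul_comm; reflexivity).
     replace ((t * q ^ j) ^ k) with (alpha ^ k * s ^ k * (q ^ j) ^ k) by (unfold t; rewrite !Rpow_mult_distr; ring).
     rewrite !RC_mult. pose proof (qq_nz q k Hq). cfield. auto. }
 assert (Htq : forall j, 0 <= t * q ^ j < 1).
 { intros j. pose proof (pow_le1 q j). pose proof (pow_le q j). split; nra. }
 apply Cconv_lim_eq with (l := Csum (fun j => ((A j * RC (q ^ j)) * Gf q u C1 C2 (t * q ^ j))%C) (S n)).
 2:{ apply series_fin. intros j _.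
     pose proof (GF q u C1 C2 Hq Hu Hm HC1 HCC (t * q ^ j) (Htq j)) as G.
     eapply Cconv_ext; [|apply (Cconv_scal (A j * RC (q ^ j))%C _ _ G)]. intros N. cbv beta. unfold F.
     rewrite <- Csum_scal. reflexivity. }
 assert (EX1 : forall i, (C1 * RC t * RC (q ^ i))%C = (RC (alpha * a * q ^ S i) * c)%C).
 { intros i. unfold C1. replace (alpha * a * q ^ S i) with (s * t * q ^ i).
   rewrite !RC_mult. cring. unfold t. simpl. transitivity (alpha * (s * s) * q ^ i); [ring|]. rewrite Hss; ring. }
 assert (EX2 : forall i, (C2 * RC t * RC (q ^ i))%C = (RC (alpha * b * q ^ S i) / c)%C).
 { intros i. unfold C2. replace (alpha * b * q ^ S i) with (b * (q / s) * t * q ^ i).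
   rewrite !RC_mult. cfield. auto. unfold t. simpl. field. lra. }
 assert (N1 : forall j, qpoch (C1 * RC t)%C q j <> RC 0).
 { intros j. apply qpoch_nz. intros i _. rewrite EX1. apply neq_one_minus. apply (hnd1 (S i)). lia. }
 assert (N2 : forall j, qpoch (C2 * RC t)%C q j <> RC 0).
 { intros j. apply qpoch_nz. intros i _. rewrite EX2. apply neq_one_minus.
   pose proof (hnd2 (S i) ltac:(lia)) as X. rewrite Cdiv_eqC in X. exact X. }
 assert (NA : forall j, qpoch (RC (a * q)) q j <> RC 0).
 { intros j. apply qpoch_nz. intros i _. rewrite <- RC_mult, <- RC_minus. apply RC_neq.
   pose proof (pow_le1 q i). pose proof (pow_le q i).
   assert (a * q < 1). { apply (Rmult_lt_compat_r q) in ha1; auto. rewrite Rinv_l in ha1; lra. }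
   assert (0 <= a * q * (1 - q ^ i)) by (apply Rmult_le_pos; lra). lra. }
 rewrite (Csum_ext _ (fun j => (Gf q u C1 C2 t * ((A j * RC (q ^ j)) *
     ((qpoch (RC t * u) q j * qpoch (RC t * / u) q j) / (qpoch (C1 * RC t) q j * qpoch (C2 * RC t) q j))))%C)).
 2:{ intros j _. rewrite Gf_shift by auto. pose proof (N1 j). pose proof (N2 j). cfield. split; auto. }
 rewrite Csum_scal. rewrite aw_form. fold u.
 assert (Ha0 : alpha <> 0) by lra.
 assert (EA : (RC t * C1 * C2 * RC (s / alpha) * RC (powerRZ q (Z.of_nat n - 1)))%C = RC (a * b * q ^ S n)).
 { replace (RC t * C1 * C2)%C with (RC t * (C1 * C2))%C by cring. rewrite HC12, <- !RC_mult. f_equal.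
   replace (q ^ S n) with (q * (powerRZ q (Z.of_nat n - 1) * q)) by (rewrite powerRZ_pred; [simpl; ring|lra]).
   unfold t. transitivity ((s * s) * b * q * powerRZ q (Z.of_nat n - 1)). field; lra. rewrite Hss. ring. }
 assert (E12 : (RC t * C1)%C = (C1 * RC t)%C) by cring.
 assert (E13 : (RC t * C2)%C = (C2 * RC t)%C) by cring.
 assert (E14 : (RC t * RC (s / alpha))%C = RC (a * q)).
 { rewrite <- RC_mult. f_equal. unfold t. transitivity (s * s). field; lra. auto. }
 rewrite EA, E12, E13, E14.
 set (SS := Csum (fun k => (A k * RC (q ^ k) * (qpoch (RC t * u) q k * qpoch (RC t * / u) q k /
      (qpoch (C1 * RC t) q k * qpoch (C2 * RC t) q k)))%C) (S n)).
 erewrite (Csum_ext _ (fun k => (A k * RC (q ^ k) * (qpoch (RC t * u) q k * qpoch (RC t * / u) q k /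
      (qpoch (C1 * RC t) q k * qpoch (C2 * RC t) q k)))%C) (S n)).
 2:{ intros j _. unfold A. rewrite <- RC_pow. pose proof (N1 j). pose proof (N2 j). pose proof (NA j).
     pose proof (qq_nz q j Hq). cfield. repeat split; auto. }
 fold SS. unfold Gf.
 rewrite (qpoch_inf_split (C1 * RC t)%C q n Hq), (qpoch_inf_split (C2 * RC t)%C q n Hq), EX1, EX2.
 replace (alpha ^ n * s ^ n) with (t ^ n) by (unfold t; rewrite Rpow_mult_distr; ring). rewrite RC_pow.
 assert (Y1 : qpoch_inf (RC t * u)%C q <> RC 0).
 { apply qpoch_inf_nz; auto. rewrite Cmod_mult, Hm, Cmod_RC, Rabs_pos_eq; lra. }
 assert (Y2 : qpoch_inf (RC t * / u)%C q <> RC 0).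
 { apply qpoch_inf_nz; auto. rewrite Cmod_mult, (Cmod_inv u Hu), Hm, Cmod_RC, Rabs_pos_eq by lra. rewrite Rinv_1. lra. }
 assert (Tn : RC t <> RC 0) by (apply RC_neq; unfold t; nra).
 pose proof (NA n). cfield. repeat split; auto. apply Cpow_nz; auto.
Qed.
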